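(* Consider the threshold delay system (the ''TDE model'') described in the context, with the quantities $N_{T1}$, $P_2^*$, $N_{T2}$, $N_1^*$, $P_1^*$ defined there. If $N_{T1}<N_T<N_{T2}$, then the equilibrium $E_1=(N_1^*,P_1^*,0)^T$ is asymptotically stable, in the following sense: for every $\varepsilon>0$ there is a neighbourhood $\mathcal{N}_\varepsilon$ of $E_1$ such that whenever $(\phi_1,\phi_2,\phi_3)\in D_{N_T}\cap\mathcal{N}_\varepsilon$, the solution $(N,P,Z)^T$ of the corresponding initial value problem satisfies $\|(N(t),P(t),Z(t))^T-E_1\|<\varepsilon$ for all $t\ge t_0$ and $\lim_{t\to\infty}(N(t),P(t),Z(t))^T=E_1$.
   Context: Standing assumptions: constants $\mu>\lambda>0$, $g>0$, $\gamma\in(0,1]$, $\delta>0$ with $\gamma g>\delta$, $\delta_0\ge 0$, $m>0$, $N_T>0$. The functions $f,h:[0,\infty)\to[0,\infty)$ are $C^1$ with $f(0)=0$, $f'>0$, $\lim_{N\to\infty}f(N)=1$ and $h(0)=0$, $h'>0$, $\lim_{P\to\infty}h(P)=1$. The function $R:[0,\infty)\to[0,\infty)$ is $C^1$ with $R\ge0$, $R'\ge0$, $R'(0)>0$ if $R(0)=0$, $\lim_{P\to\infty}R(P)=R_\infty<\infty$. For a function $P$ and $s\in[0,m]$, the delay $\tau(s,P_t)\ge0$ is defined implicitly by $\int_{-\tau(s,P_t)}^0 R(P(t+u))\,du=s$. TDE model, for $t\ge t_0$: $$N'(t)=-\mu P f(N)+\lambda P+\delta Z+(1-\gamma)gZh(P)+\delta_0(N_T-N-P-Z),$$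 $$P'(t)=\mu P f(N)-\lambda P-gZh(P),$$ $$Z'(t)=R(P(t))e^{-\delta_0\tau(m,P_t)}\frac{\gamma g Z(t-\tau(m,P_t))h(P(t-\tau(m,P_t)))}{R(P(t-\tau(m,P_t)))}-\delta Z(t),$$ with initial conditions $N(t_0+t)=\phi_1(t)$, $P(t_0+t)=\phi_2(t)$, $Z(t_0+t)=\phi_3(t)$ for $t\in[-t_0,0]$. $D_{N_T}$ is the set of triples $(\phi_1,\phi_2,\phi_3)$ of continuous functions on $[-t_0,0]$ (some $t_0>0$) with $\phi_i>0$, $\int_{-t_0}^0R(\phi_2(u))\,du=m$, and $$N_T=\phi_1(0)+\phi_2(0)+\phi_3(0)+\int_0^m e^{-\delta_0\tau(s,\phi_2)}\frac{\gamma g\,\phi_3(-\tau(s,\phi_2))h(\phi_2(-\tau(s,\phi_2)))}{R(\phi_2(-\tau(s,\phi_2)))}\,ds,$$ where $\tau(s,\phi_2)\in[0,t_0]$ solves $\int_{-\tau(s,\phi_2)}^0R(\phi_2(u))\,du=s$. Neighbourhoods of the constant triple $E_1$ are taken with respect to the sup norm of the initial functions. Define $N_{T1}=f^{-1}(\lambda/\mu)$, $N_1^*=N_{T1}$, $P_1^*=N_T-N_{T1}$. Let $P_2^*>0$ be the unique positive solution of $\gamma g\,e^{-\delta_0 m/R(P)}h(P)=\delta$ (it exists if $\delta_0=0$, or if $\delta_0>0$ and $m<R_\infty\ln(\gamma g/\delta)/\delta_0$; this is assumed), and $N_{T2}=N_{T1}+P_2^*$. *)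

(* Defs.v *)
From Stdlib Require Import Reals ClassicalEpsilon.
From Coquelicot Require Import Coquelicot.
Open Scope R_scope.

Definition C1_nonneg (f df : R -> R) : Prop :=
  (forall x, 0 < x -> is_derive f x (df x)) /\
  filterlim (fun y => (f y - f 0) / y) (at_right 0) (locally (df 0)) /\
  (forall x, 0 <= x ->
     filterlim df (within (fun y => 0 <= y) (locally x)) (locally (df x))).

Definition continuous_on_interval (a b : R) (phi : R -> R) : Prop :=
  forall x, a <= x <= b ->
    filterlim phi (within (fun y => a <= y <= b) (locally x)) (locally (phi x)).

Definition continuous_from (a : R) (phi : R -> R) : Prop :=
  forall x, a <= x ->
    filterlim phi (within (fun y => a <= y) (locally x)) (locally (phi x)).

(* The implicitly defined delay: for a history [hist] (a function of u <= 0,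
   meaningful on [-a, 0]), [delay Rr a hist s] is the tau in [0,a] with
     int_{-tau}^0 Rr (hist u) du = s
   (chosen by Hilbert's epsilon; it is unique whenever Rr o hist > 0). *)
Definition delay (Rr : R -> R) (a : R) (hist : R -> R) (s : R) : R :=
  epsilon (inhabits 0)
    (fun tau => 0 <= tau <= a /\ RInt (fun u => Rr (hist u)) (- tau) 0 = s).

Definition in_D (g gamma delta0 m NT : R) (h Rr : R -> R)
    (t0 : R) (phi1 phi2 phi3 : R -> R) : Prop :=
  0 < t0 /\
  continuous_on_interval (- t0) 0 phi1 /\
  continuous_on_interval (- t0) 0 phi2 /\
  continuous_on_interval (- t0) 0 phi3 /\
  (forall u, - t0 <= u <= 0 -> 0 < phi1 u /\ 0 < phi2 u /\ 0 < phi3 u) /\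
  RInt (fun u => Rr (phi2 u)) (- t0) 0 = m /\
  NT = phi1 0 + phi2 0 + phi3 0 +
       RInt (fun s =>
               let tau := delay Rr t0 phi2 s in
               exp (- delta0 * tau) * gamma * g * phi3 (- tau) * h (phi2 (- tau))
               / Rr (phi2 (- tau))) 0 m.

(* (N,P,Z) is a solution on [t0, +oo) of the TDE model with initial data
   N(t0+t) = phi1 t, P(t0+t) = phi2 t, Z(t0+t) = phi3 t for t in [-t0,0]
   (so the history lives on [0,t0]); the delay tau(m, P_t) at time t >= t0
   is computed from the history u |-> P(t+u), u in [-t,0]. *)
Definition is_TDE_solution (mu lambda g gamma delta delta0 m NT : R)
    (f h Rr : R -> R) (t0 : R) (phi1 phi2 phi3 : R -> R)
    (N P Z : R -> R) : Prop :=
  (forall t, - t0 <= t <= 0 ->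
     N (t0 + t) = phi1 t /\ P (t0 + t) = phi2 t /\ Z (t0 + t) = phi3 t) /\
  continuous_from 0 N /\ continuous_from 0 P /\ continuous_from 0 Z /\
  (forall t, t0 < t ->
     let tau := delay Rr t (fun u => P (t + u)) m in
     is_derive N t
       (- mu * P t * f (N t) + lambda * P t + delta * Z t
        + (1 - gamma) * g * Z t * h (P t)
        + delta0 * (NT - N t - P t - Z t)) /\
     is_derive P t
       (mu * P t * f (N t) - lambda * P t - g * Z t * h (P t)) /\
     is_derive Z t
       (Rr (P t) * exp (- delta0 * tau)
          * (gamma * g * Z (t - tau) * h (P (t - tau)) / Rr (P (t - tau)))
        - delta * Z t)).

(* Main.v *)
Require Import Defs.
From Stdlib Require Import Reals Lra Psatz Classical ClassicalEpsilon.
From Coquelicot Require Import Coquelicot.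
Open Scope R_scope.


Lemma ed_cont (g:R->R) x :
  (forall eps, 0<eps -> exists d, 0<d /\ forall y, Rabs (y-x) < d -> Rabs (g y - g x) < eps) ->
  continuous g x.
Proof.
  intros H. apply continuity_pt_filterlim.
  intros eps Heps. destruct (H eps Heps) as [d [Hd Hy]].
  exists d. split; auto. intros y [_ Hy']. apply Hy. exact Hy'.
Qed.

Lemma cont_ed (g:R->R) x : continuous g x ->
  forall eps, 0<eps -> exists d, 0<d /\ forall y, Rabs (y-x) < d -> Rabs (g y - g x) < eps.
Proof.
  intros H. apply continuity_pt_filterlim in H.
  intros eps Heps. destruct (H eps Heps) as [d [Hd Hy]].
  exists d. split; auto. intros y Hyx.
  destruct (Req_dec y x) as [->|Hne].
  - rewrite Rminus_eq_0, Rabs_R0; auto.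
  - apply (Hy y). split; [split; [exact I| auto]| exact Hyx].
Qed.

Lemma within_ed (D : R -> Prop) (phi : R -> R) x :
  filterlim phi (within D (locally x)) (locally (phi x)) ->
  forall eps, 0<eps -> exists d, 0<d /\ forall y, D y -> Rabs (y-x) < d -> Rabs (phi y - phi x) < eps.
Proof.
  intros H eps Heps.
  assert (Hb := H (ball (phi x) (mkposreal eps Heps)) (locally_ball _ _)).
  destruct Hb as [d Hd]. exists d. split; [apply cond_pos|].
  intros y Dy Hyx. apply (Hd y); auto.
Qed.

Lemma cont_pt_of (g:R->R) x : continuous g x -> continuity_pt g x.
Proof. intros H; now apply continuity_pt_filterlim. Qed.

Lemma within_cont (D : R -> Prop) (phi : R -> R) x :
  filterlim phi (within D (locally x)) (locally (phi x)) ->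
  (exists d, 0 < d /\ forall y, Rabs (y - x) < d -> D y) ->
  continuous phi x.
Proof.
  intros H [d0 [Hd0 HD]]. apply ed_cont. intros eps Heps.
  destruct (within_ed D phi x H eps Heps) as [d [Hd Hy]].
  exists (Rmin d d0). split. apply Rmin_pos; auto.
  intros y Hyx. apply Hy. apply HD. eapply Rlt_le_trans; [exact Hyx| apply Rmin_r].
  eapply Rlt_le_trans; [exact Hyx| apply Rmin_l].
Qed.

Lemma cont_from_pos (phi : R -> R) x : continuous_from 0 phi -> 0 < x -> continuous phi x.
Proof.
  intros H Hx. apply (within_cont (fun y => 0 <= y)). apply H; lra.
  exists x. split; auto. intros y Hy. apply Rabs_def2 in Hy. lra.
Qed.

Definition clamp (a b x : R) := Rmax a (Rmin b x).

Lemma clamp_in a b x : a <= b -> a <= clamp a b x <= b.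
Proof. intros. unfold clamp. split. apply Rmax_l. apply Rmax_lub; auto. apply Rmin_l. Qed.

Lemma clamp_id a b x : a <= x <= b -> clamp a b x = x.
Proof. intros. unfold clamp. rewrite Rmin_right by lra. rewrite Rmax_right by lra. auto. Qed.

Lemma clamp_lip a b x y : Rabs (clamp a b y - clamp a b x) <= Rabs (y - x).
Proof.
  unfold clamp, Rmax, Rmin.
  repeat (destruct Rle_dec); unfold Rabs; repeat destruct Rcase_abs; lra.
Qed.

Lemma cont_clamp (D : R -> Prop) a b (phi : R -> R) :
  a <= b ->
  (forall x, a <= x <= b -> forall eps, 0<eps -> exists d, 0<d /\ forall y, a <= y <= b -> Rabs (y-x) < d -> Rabs (phi y - phi x) < eps) ->
  forall x, continuous (fun z => phi (clamp a b z)) x.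
Proof.
  intros Hab H x. apply ed_cont. intros eps Heps.
  destruct (H (clamp a b x) (clamp_in a b x Hab) eps Heps) as [d [Hd Hy]].
  exists d. split; auto. intros y Hyx. apply Hy. apply clamp_in; auto.
  eapply Rle_lt_trans; [apply clamp_lip| auto].
Qed.

Lemma cont_on_interval_ed a b phi : continuous_on_interval a b phi ->
  forall x, a <= x <= b -> forall eps, 0<eps -> exists d, 0<d /\ forall y, a <= y <= b -> Rabs (y-x) < d -> Rabs (phi y - phi x) < eps.
Proof. intros H x Hx. apply (within_ed (fun y => a <= y <= b)). apply H; auto. Qed.

Lemma cont_from_ed a b phi : continuous_from a phi ->
  forall x, a <= x <= b -> forall eps, 0<eps -> exists d, 0<d /\ forall y, a <= y <= b -> Rabs (y-x) < d -> Rabs (phi y - phi x) < eps.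
Proof.
  intros H x Hx eps Heps.
  destruct (within_ed (fun y => a <= y) phi x (H x ltac:(lra)) eps Heps) as [d [Hd Hy]].
  exists d; split; auto. intros y Hy1 Hy2. apply Hy; lra.
Qed.


Lemma within_ed' (D : R -> Prop) (phi : R -> R) x L :
  filterlim phi (within D (locally x)) (locally L) ->
  forall eps, 0<eps -> exists d, 0<d /\ forall y, D y -> Rabs (y-x) < d -> Rabs (phi y - L) < eps.
Proof.
  intros H eps Heps.
  assert (Hb := H (ball L (mkposreal eps Heps)) (locally_ball _ _)).
  destruct Hb as [d Hd]. exists d. split; [apply cond_pos|].
  intros y Dy Hyx. apply (Hd y); auto.
Qed.

Lemma C1_der f df x : C1_nonneg f df -> 0 < x -> is_derive f x (df x).
Proof. intros [H _] Hx; auto. Qed.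

Lemma C1_cont f df x : C1_nonneg f df -> 0 < x -> continuous f x.
Proof. intros H Hx. apply continuity_pt_filterlim. apply derivable_continuous_pt.
  exists (df x). apply is_derive_Reals. apply (C1_der f df x H Hx). Qed.

Lemma C1_mvt f df x y : C1_nonneg f df -> 0 < x -> x < y ->
  exists c, x <= c <= y /\ f y - f x = df c * (y - x).
Proof.
  intros H Hx Hxy.
  destruct (MVT_gen f x y df) as [c [Hc Hfc]].
  - intros z Hz. rewrite Rmin_left, Rmax_right in Hz by lra. apply (C1_der f df z H); lra.
  - intros z Hz. rewrite Rmin_left, Rmax_right in Hz by lra. apply cont_pt_of. apply (C1_cont f df z H); lra.
  - rewrite Rmin_left, Rmax_right in Hc by lra. exists c; auto.
Qed.

Lemma C1_incr f df : C1_nonneg f df -> (forall x, 0<=x -> df x > 0) ->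
  forall x y, 0 < x -> x < y -> f x < f y.
Proof.
  intros H Hd x y Hx Hxy. destruct (C1_mvt f df x y H Hx Hxy) as [c [Hc E]].
  assert (df c > 0) by (apply Hd; lra). nra.
Qed.

Lemma C1_nondecr f df : C1_nonneg f df -> (forall x, 0<=x -> 0 <= df x) ->
  forall x y, 0 < x -> x <= y -> f x <= f y.
Proof.
  intros H Hd x y Hx Hxy. destruct (Req_dec x y) as [->|Hne]; [lra|].
  destruct (C1_mvt f df x y H Hx ltac:(lra)) as [c [Hc E]].
  assert (0 <= df c) by (apply Hd; lra). nra.
Qed.

Lemma R_pos Rr dRr : C1_nonneg Rr dRr -> (forall x, 0 <= x -> 0 <= Rr x) ->
  (forall x, 0 <= x -> 0 <= dRr x) -> (Rr 0 = 0 -> dRr 0 > 0) ->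
  forall x, 0 < x -> 0 < Rr x.
Proof.
  intros HC Hnn Hd Hd0 x Hx.
  destruct HC as [H1 [H2 H3]].
  assert (Hmono := C1_nondecr Rr dRr (conj H1 (conj H2 H3)) Hd).
  assert (HR0 := Hnn 0 (Rle_refl 0)).
  destruct (Req_dec (Rr 0) 0) as [E|E].
  - assert (L := Hd0 E).
    destruct (within_ed' _ _ 0 _ H2 (dRr 0 / 2) ltac:(lra)) as [d [Hd' Hy]].
    set (y := Rmin d x / 2).
    assert (Hy0 : 0 < y) by (unfold y; assert (0 < Rmin d x) by (apply Rmin_pos; lra); lra).
    assert (Hyd : y < d) by (unfold y; assert (Rmin d x <= d) by apply Rmin_l; lra).
    assert (Hyx : y < x) by (unfold y; assert (Rmin d x <= x) by apply Rmin_r; lra).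
    assert (A := Hy y Hy0 ltac:(rewrite Rminus_0_r, Rabs_pos_eq; lra)).
    rewrite E, Rminus_0_r in A. apply Rabs_def2 in A.
    assert (Q1 : 0 < Rr y / y) by lra.
    assert (Q2 : 0 < Rr y). { replace (Rr y) with (Rr y / y * y) by (field; lra). nra. }
    eapply Rlt_le_trans; [exact Q2|]. apply Hmono; lra.
  - assert (L := Hd 0 (Rle_refl 0)).
    destruct (within_ed' _ _ 0 _ H2 1 ltac:(lra)) as [d [Hd' Hy]].
    set (y := Rmin (Rmin d x) (Rr 0) / 2).
    assert (Hm1 : Rmin (Rmin d x) (Rr 0) <= Rmin d x) by apply Rmin_l.
    assert (Hm2 : Rmin (Rmin d x) (Rr 0) <= Rr 0) by apply Rmin_r.
    assert (Hm3 : Rmin d x <= d) by apply Rmin_l.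
    assert (Hm4 : Rmin d x <= x) by apply Rmin_r.
    assert (Hm0 : 0 < Rmin (Rmin d x) (Rr 0)) by (repeat apply Rmin_pos; lra).
    assert (Hy0 : 0 < y) by (unfold y; lra).
    assert (A := Hy y Hy0 ltac:(rewrite Rminus_0_r, Rabs_pos_eq; unfold y; lra)).
    apply Rabs_def2 in A.
    assert (Q1 : -1 < (Rr y - Rr 0)/y) by lra.
    assert (Q2 : - y < Rr y - Rr 0).
    { replace (Rr y - Rr 0) with ((Rr y - Rr 0)/y * y) by (field; lra). nra. }
    assert (Q3 : 0 < Rr y) by (unfold y in *; lra).
    eapply Rlt_le_trans; [exact Q3|]. apply Hmono; unfold y; lra.
Qed.


Lemma cpt_ed (q : R -> R) x : continuity_pt q x ->
  forall eps, 0<eps -> exists d, 0<d /\ forall y, Rabs (y-x) < d -> Rabs (q y - q x) < eps.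
Proof. intros H. apply cont_ed. now apply continuity_pt_filterlim. Qed.

Lemma first_cross (q : R -> R) a b : a <= b ->
  (forall x, a <= x <= b -> continuity_pt q x) -> q a < 0 -> 0 <= q b ->
  exists t1, a < t1 <= b /\ q t1 = 0 /\ forall r, a <= r < t1 -> q r < 0.
Proof.
  intros Hab Hc Ha Hb.
  set (E := fun x => a <= x <= b /\ forall r, a <= r <= x -> q r < 0).
  assert (HEa : E a) by (split; [lra| intros r Hr; replace r with a by lra; auto]).
  assert (Hbd : bound E) by (exists b; intros x [Hx _]; lra).
  destruct (completeness E Hbd (ex_intro _ a HEa)) as [t1 [Hub Hlub]].
  assert (Ht1a : a <= t1) by (apply Hub; exact HEa).
  assert (Ht1b : t1 <= b) by (apply Hlub; intros x [Hx _]; lra).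
  assert (Hbelow : forall r, a <= r < t1 -> q r < 0).
  { intros r Hr.
    destruct (classic (exists x, E x /\ r <= x)) as [[x [[Hx1 Hx2] Hrx]]|Hn].
    - apply Hx2; lra.
    - exfalso. assert (t1 <= r); [|lra]. apply Hlub. intros x Ex.
      destruct (Rle_dec x r); auto. exfalso; apply Hn; exists x; split; auto; lra. }
  assert (Hge : 0 <= q t1).
  { destruct (Rle_dec 0 (q t1)) as [|Hn]; auto. exfalso.
    assert (Hlt : t1 < b) by (destruct (Req_dec t1 b); [subst; lra| lra]).
    destruct (cpt_ed q t1 (Hc t1 ltac:(lra)) (- q t1) ltac:(lra)) as [d [Hd Hy]].
    set (x := Rmin (t1 + d/2) b).
    assert (Hx1 : x <= t1 + d/2) by apply Rmin_l.
    assert (Hx2 : x <= b) by apply Rmin_r.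
    assert (Hx3 : t1 < x) by (unfold x; apply Rmin_glb_lt; lra).
    assert (E x).
    { split; [lra|]. intros r Hr. destruct (Rlt_dec r t1) as [Hl|Hl]. apply Hbelow; lra.
      assert (A := Hy r ltac:(rewrite Rabs_pos_eq; lra)). apply Rabs_def2 in A. lra. }
    assert (x <= t1) by (apply Hub; auto). lra. }
  assert (Hle : q t1 <= 0).
  { destruct (Rle_dec (q t1) 0) as [|Hn]; auto. exfalso.
    destruct (cpt_ed q t1 (Hc t1 ltac:(lra)) (q t1) ltac:(lra)) as [d [Hd Hy]].
    destruct (Req_dec a t1) as [Ea|Ea]. subst; lra.
    set (r := Rmax a (t1 - d/2)).
    assert (Hr1 : a <= r) by apply Rmax_l.
    assert (Hr2 : t1 - d/2 <= r) by apply Rmax_r.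
    assert (Hr3 : r < t1) by (unfold r; apply Rmax_lub_lt; lra).
    assert (A := Hy r ltac:(rewrite Rabs_left; lra)). apply Rabs_def2 in A.
    assert (q r < 0) by (apply Hbelow; lra). lra. }
  exists t1. split; [|split; [lra| exact Hbelow]].
  split; auto. destruct (Req_dec a t1) as [Ea|]; [|lra]. subst. lra.
Qed.

Lemma deriv_cross (y w : R -> R) t1 y' w' d : 0 < d ->
  is_derive y t1 y' -> is_derive w t1 w' -> y t1 = w t1 ->
  (forall r, t1 - d < r < t1 -> y r < w r) -> w' <= y'.
Proof.
  intros Hd Hy Hw E Hb.
  destruct (Rle_dec w' y') as [|Hn]; auto. exfalso.
  assert (HD : is_derive (fun x => y x - w x) t1 (y' - w')) by (apply (is_derive_minus y w); auto).
  apply is_derive_Reals in HD.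
  destruct (HD ((w' - y')/2) ltac:(lra)) as [del Hdel].
  set (hh := - Rmin del d / 2).
  assert (Hm0 : 0 < Rmin del d) by (apply Rmin_pos; [apply cond_pos| lra]).
  assert (Hm1 : Rmin del d <= del) by apply Rmin_l.
  assert (Hm2 : Rmin del d <= d) by apply Rmin_r.
  assert (A := Hdel hh ltac:(unfold hh; lra) ltac:(unfold hh; rewrite Rabs_left; lra)).
  rewrite E in A. replace (w t1 - w t1) with 0 in A by ring.
  apply Rabs_def2 in A.
  assert (B : y (t1 + hh) < w (t1 + hh)) by (apply Hb; unfold hh; lra).
  assert (C : (y (t1 + hh) - w (t1 + hh) - 0) / hh > 0).
  { assert (hh < 0) by (unfold hh; lra). assert (/hh < 0) by (apply Rinv_lt_0_compat; lra).
    unfold Rdiv. nra. }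
  lra.
Qed.


Lemma exp_le_exp x y : x <= y -> exp x <= exp y.
Proof. intros [H|H]. left; apply exp_increasing; auto. subst; lra. Qed.

Lemma cpt_abs (Z : R -> R) x : continuity_pt Z x -> continuity_pt (fun y => Rabs (Z y)) x.
Proof. intros H. apply (continuity_pt_comp Z Rabs); auto. apply Rcontinuity_abs. Qed.

Lemma halanay (Z Zd v : R -> R) a b A c del kap tmax :
  0 < a -> a <= b -> 0 < A -> 0 < kap -> 0 <= c -> 0 <= tmax ->
  c * exp (kap * tmax) < del - kap ->
  (forall x, a <= x <= b -> continuity_pt Z x) ->
  (forall s, 0 <= s <= a -> Rabs (Z s) < A) ->
  (forall t, a < t <= b -> is_derive Z t (Zd t) /\ t - tmax <= v t <= t /\ 0 <= v t /\
       Rabs (Zd t + del * Z t) <= c * Rabs (Z (v t))) ->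
  forall t, a <= t <= b -> Rabs (Z t) < A * exp (- kap * (t - a)).
Proof.
  intros Ha Hab HA Hk Hc Htm Hkey Hcont Hhist Hdyn.
  set (W := fun t => A * exp (- kap * (t - a))).
  assert (HWpos : forall t, 0 < W t) by (intros; unfold W; apply Rmult_lt_0_compat; auto; apply exp_pos).
  assert (HWder : forall t, is_derive W t (- kap * W t)).
  { intros t. unfold W. auto_derive; auto. unfold Rminus; ring. }
  assert (HWge : forall s, s <= a -> A <= W s).
  { intros s Hs. unfold W. rewrite <- (Rmult_1_r A) at 1. apply Rmult_le_compat_l; [lra|].
    rewrite <- exp_0. apply exp_le_exp. nra. }
  intros t Ht. fold (W t).
  destruct (Rlt_dec (Rabs (Z t)) (W t)) as [|Hn]; auto. exfalso.
  set (q := fun x => Rabs (Z x) - W x).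
  assert (Hqc : forall x, a <= x <= t -> continuity_pt q x).
  { intros x Hx. unfold q. apply continuity_pt_minus. apply cpt_abs. apply Hcont; lra.
    apply derivable_continuous_pt. eexists. apply is_derive_Reals. apply HWder. }
  assert (Hqa : q a < 0).
  { unfold q. assert (Rabs (Z a) < A) by (apply Hhist; lra). assert (A <= W a) by (apply HWge; lra). lra. }
  destruct (first_cross q a t ltac:(lra) Hqc Hqa ltac:(unfold q; lra)) as [t1 [Ht1 [Hq1 Hbel]]].
  unfold q in Hq1, Hbel.
  assert (Hbel' : forall r, 0 <= r < t1 -> Rabs (Z r) < W r).
  { intros r Hr. destruct (Rle_dec r a). assert (Rabs (Z r) < A) by (apply Hhist; lra).
    assert (A <= W r) by (apply HWge; lra). lra. assert (Rabs (Z r) - W r < 0) by (apply Hbel; lra). lra. }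
  destruct (Hdyn t1 ltac:(lra)) as [HZd [Hv1 [Hv2 Hineq]]].
  assert (Hzv : Rabs (Z (v t1)) <= W (v t1)).
  { destruct (Req_dec (v t1) t1) as [E|E]. rewrite E; lra. left; apply Hbel'; lra. }
  assert (Hwv : W (v t1) <= exp (kap * tmax) * W t1).
  { unfold W. replace (exp (- kap * (v t1 - a))) with (exp (kap * (t1 - v t1)) * exp (- kap * (t1 - a))).
    2:{ rewrite <- exp_plus. f_equal. ring. }
    assert (exp (kap * (t1 - v t1)) <= exp (kap * tmax)) by (apply exp_le_exp; nra).
    assert (0 < exp (- kap * (t1 - a))) by apply exp_pos.
    replace (exp (kap * tmax) * (A * exp (- kap * (t1 - a)))) with (A * (exp (kap*tmax) * exp (-kap*(t1-a)))) by ring.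
    apply Rmult_le_compat_l; [lra|]. apply Rmult_le_compat_r; [lra|auto]. }
  assert (Hcw : c * Rabs (Z (v t1)) <= c * exp (kap * tmax) * W t1).
  { assert (c * Rabs (Z (v t1)) <= c * W (v t1)) by (apply Rmult_le_compat_l; auto). nra. }
  assert (HW1 := HWpos t1).
  destruct (Rle_dec 0 (Z t1)) as [Hp|Hp].
  - rewrite Rabs_pos_eq in Hq1 by auto.
    assert (L : - kap * W t1 <= Zd t1).
    { apply (deriv_cross Z W t1 (Zd t1) (- kap * W t1) (t1 - a)); auto; try lra.
      intros r Hr. assert (Rabs (Z r) - W r < 0) by (apply Hbel; lra).
      assert (Z r <= Rabs (Z r)) by apply Rle_abs. lra. }
    apply Rabs_le_between in Hineq. nra.
  - rewrite Rabs_left in Hq1 by lra.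
    assert (L : - kap * W t1 <= - Zd t1).
    { apply (deriv_cross (fun x => - Z x) W t1 (- Zd t1) (- kap * W t1) (t1 - a)); auto; try lra.
      apply (is_derive_opp Z). auto.
      intros r Hr. assert (Rabs (Z r) - W r < 0) by (apply Hbel; lra).
      assert (- Z r <= Rabs (Z r)) by (rewrite <- Rabs_Ropp; apply Rle_abs). lra. }
    apply Rabs_le_between in Hineq. nra.
Qed.


Lemma band_stay (P Pd : R -> R) a b c s : 0 < s -> a <= b ->
  (forall x, a <= x <= b -> continuity_pt P x) -> Rabs (P a - c) < s ->
  (forall t, a < t <= b -> is_derive P t (Pd t)) ->
  (forall t, a < t <= b -> (forall r, a <= r <= t -> Rabs (P r - c) <= s) ->
      (P t = c + s -> Pd t < 0) /\ (P t = c - s -> 0 < Pd t)) ->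
  forall t, a <= t <= b -> Rabs (P t - c) < s.
Proof.
  intros Hs Hab Hcont Ha Hder Hsign t Ht.
  destruct (Rlt_dec (Rabs (P t - c)) s) as [|Hn]; auto. exfalso.
  set (q := fun x => Rabs (P x - c) - s).
  assert (Hqc : forall x, a <= x <= t -> continuity_pt q x).
  { intros x Hx. unfold q. apply continuity_pt_minus; [|apply continuity_pt_const; intros ? ?; auto].
    apply cpt_abs. apply continuity_pt_minus; [apply Hcont; lra| apply continuity_pt_const; intros ? ?; auto]. }
  destruct (first_cross q a t ltac:(lra) Hqc ltac:(unfold q; lra) ltac:(unfold q; lra)) as [t1 [Ht1 [Hq1 Hbel]]].
  unfold q in Hq1, Hbel.
  assert (Hband : forall r, a <= r <= t1 -> Rabs (P r - c) <= s).
  { intros r Hr. destruct (Req_dec r t1). subst; lra. assert (Rabs (P r - c) - s < 0) by (apply Hbel; lra). lra. }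
  destruct (Hsign t1 ltac:(lra) Hband) as [S1 S2].
  destruct (Rle_dec 0 (P t1 - c)) as [Hp|Hp].
  - rewrite Rabs_pos_eq in Hq1 by auto.
    assert (L : 0 <= Pd t1).
    { apply (deriv_cross P (fun _ => c + s) t1 (Pd t1) 0 (t1 - a)); try lra.
      apply Hder; lra. apply is_derive_Reals; apply derivable_pt_lim_const. 
      intros r Hr. assert (Rabs (P r - c) - s < 0) by (apply Hbel; lra).
      assert (P r - c <= Rabs (P r - c)) by apply Rle_abs. lra. }
    assert (Pd t1 < 0) by (apply S1; lra). lra.
  - rewrite Rabs_left in Hq1 by lra.
    assert (L : 0 <= - Pd t1).
    { apply (deriv_cross (fun x => - P x) (fun _ => - (c - s)) t1 (- Pd t1) 0 (t1 - a)); try lra.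
      apply (is_derive_opp P). apply Hder; lra. apply is_derive_Reals; apply derivable_pt_lim_const.
      intros r Hr. assert (Rabs (P r - c) - s < 0) by (apply Hbel; lra).
      assert (- (P r - c) <= Rabs (P r - c)) by (rewrite <- Rabs_Ropp; apply Rle_abs). lra. }
    assert (0 < Pd t1) by (apply S2; lra). lra.
Qed.


Section Inv.
Variables (F dF : R -> R) (c : R).
Hypothesis Hc : 0 < c.
Hypothesis HF : forall x, is_derive F x (dF x).
Hypothesis HdF : forall x, c <= dF x.

Lemma F_cont x : continuity_pt F x.
Proof. apply derivable_continuous_pt. exists (dF x). apply is_derive_Reals. apply HF. Qed.

Lemma F_mvt x y : x < y -> c * (y - x) <= F y - F x.
Proof.
  intros Hxy. destruct (MVT_gen F x y dF) as [z [Hz E]].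
  - intros; apply HF.
  - intros; apply F_cont.
  - rewrite E. apply Rmult_le_compat_r; [lra| apply HdF].
Qed.

Lemma F_incr x y : x < y -> F x < F y.
Proof. intros H. assert (A := F_mvt x y H). nra. Qed.

Lemma F_inj x y : F x = F y -> x = y.
Proof.
  intros E. destruct (Rtotal_order x y) as [H|[H|H]]; auto.
  apply F_incr in H; lra. apply F_incr in H; lra.
Qed.

Lemma F_le x y : F x <= F y -> x <= y.
Proof. intros H. destruct (Rle_dec x y); auto. assert (F y < F x) by (apply F_incr; lra). lra. Qed.

Lemma F_surj y : exists x, F x = y.
Proof.
  set (x1 := - (Rabs (y - F 0)) / c - 1).
  set (x2 := Rabs (y - F 0) / c + 1).
  assert (Ha : 0 <= Rabs (y - F 0)) by apply Rabs_pos.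
  assert (Hx1 : x1 < 0). { unfold x1. assert (0 <= Rabs (y - F 0) / c) by (apply Rdiv_le_0_compat; lra). lra. }
  assert (Hx2 : 0 < x2). { unfold x2. assert (0 <= Rabs (y - F 0) / c) by (apply Rdiv_le_0_compat; lra). lra. }
  assert (A1 := F_mvt x1 0 Hx1). assert (A2 := F_mvt 0 x2 Hx2).
  assert (E1 : c * (0 - x1) = Rabs (y - F 0) + c) by (unfold x1; field; lra).
  assert (E2 : c * (x2 - 0) = Rabs (y - F 0) + c) by (unfold x2; field; lra).
  assert (B := Rle_abs (y - F 0)). assert (B' : - (y - F 0) <= Rabs (y - F 0)) by (rewrite <- Rabs_Ropp; apply Rle_abs).
  destruct (IVT (fun x => F x - y) x1 x2) as [x [_ Hx]].
  - intros x. apply continuity_pt_minus. apply F_cont. apply continuity_pt_const; intros ? ?; auto.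
  - lra.
  - lra.
  - lra.
  - exists x; lra.
Qed.

Definition Finv (y : R) : R := epsilon (inhabits 0) (fun x => F x = y).

Lemma Finv_spec y : F (Finv y) = y.
Proof. unfold Finv. apply (epsilon_spec (inhabits 0) (fun x => F x = y)). apply F_surj. Qed.

Lemma Finv_F x : Finv (F x) = x.
Proof. apply F_inj. apply Finv_spec. Qed.

Lemma Finv_cont y : continuity_pt Finv y.
Proof.
  apply continuity_pt_filterlim. apply ed_cont. intros eps Heps.
  set (x0 := Finv y).
  assert (Hy : F x0 = y) by apply Finv_spec.
  assert (H1 : F (x0 - eps) < y) by (rewrite <- Hy; apply F_incr; lra).
  assert (H2 : y < F (x0 + eps)) by (rewrite <- Hy; apply F_incr; lra).
  exists (Rmin (y - F (x0 - eps)) (F (x0 + eps) - y)). split. apply Rmin_pos; lra.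
  intros z Hz. assert (Hm1 := Rmin_l (y - F (x0 - eps)) (F (x0 + eps) - y)).
  assert (Hm2 := Rmin_r (y - F (x0 - eps)) (F (x0 + eps) - y)).
  apply Rabs_def2 in Hz. apply Rabs_def1.
  - destruct (Rlt_dec (Finv z - x0) eps) as [|Hn]; auto. exfalso.
    assert (F (x0 + eps) <= F (Finv z)). { destruct (Req_dec (x0 + eps) (Finv z)) as [E|E]. rewrite E; lra. left; apply F_incr; lra. }
    rewrite Finv_spec in H. lra.
  - destruct (Rlt_dec (- eps) (Finv z - x0)) as [|Hn]; auto. exfalso.
    assert (F (Finv z) <= F (x0 - eps)). { destruct (Req_dec (x0 - eps) (Finv z)) as [E|E]. rewrite E; lra. left; apply F_incr; lra. }
    rewrite Finv_spec in H. lra.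
Qed.

Lemma Finv_derive y : is_derive Finv y (/ dF (Finv y)).
Proof.
  apply is_derive_Reals. intros eps Heps.
  set (x0 := Finv y). set (d := dF x0).
  assert (Hd : c <= d) by apply HdF.
  assert (Hy : F x0 = y) by apply Finv_spec.
  set (e1 := Rmin (d/2) (eps * d * d / 2)).
  assert (He1 : 0 < e1). { unfold e1. apply Rmin_pos. lra. assert (0 < eps * d * d) by (repeat apply Rmult_lt_0_compat; lra). lra. }
  assert (He1a : e1 <= d/2) by apply Rmin_l.
  assert (He1b : e1 <= eps * d * d / 2) by apply Rmin_r.
  assert (HFd := HF x0). apply is_derive_Reals in HFd.
  destruct (HFd e1 He1) as [d1 Hd1].
  destruct (cont_ed Finv y (proj1 (continuity_pt_filterlim _ _) (Finv_cont y)) d1 (cond_pos d1)) as [d2 [Hd2 Hc2]].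
  exists (mkposreal d2 Hd2). intros k Hk0 Hk. simpl in Hk.
  set (hh := Finv (y + k) - x0).
  assert (Hh : hh <> 0).
  { intros E. assert (F (Finv (y + k)) = F x0) by (unfold hh in E; f_equal; lra).
    rewrite Finv_spec in H. lra. }
  assert (Hhd : Rabs hh < d1) by (unfold hh, x0; apply Hc2; replace (y + k - y) with k by ring; auto).
  assert (A := Hd1 hh Hh Hhd).
  assert (Ex : x0 + hh = Finv (y + k)) by (unfold hh; ring).
  rewrite Ex, Finv_spec, Hy in A. replace (y + k - y) with k in A by ring.
  fold d in A. apply Rabs_def2 in A.
  set (q := k / hh) in *.
  assert (Hq : d/2 <= q) by lra.
  assert (Eq : hh / k = / q).
  { unfold q. field. split; auto. }
  rewrite Eq.
  replace (/ q - / d) with ((d - q) / (q * d)) by (field; lra).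
  rewrite Rabs_div by nra. rewrite (Rabs_pos_eq (q * d)) by nra.
  apply Rlt_div_l. nra.
  assert (Rabs (d - q) < e1) by (apply Rabs_def1; lra).
  assert (e1 <= eps * (q * d)). { assert (eps * d * d / 2 <= eps * (q * d)). { assert (d * d / 2 <= q * d) by nra. nra. } lra. }
  lra.
Qed.

End Inv.


Lemma cR_mult (f g : R -> R) x : continuous f x -> continuous g x -> continuous (fun y => f y * g y) x.
Proof. intros. apply continuity_pt_filterlim. apply (continuity_pt_mult f g); now apply continuity_pt_filterlim. Qed.
Lemma cR_plus (f g : R -> R) x : continuous f x -> continuous g x -> continuous (fun y => f y + g y) x.
Proof. intros. apply continuity_pt_filterlim. apply (continuity_pt_plus f g); now apply continuity_pt_filterlim. Qed.
Lemma cR_minus (f g : R -> R) x : continuous f x -> continuous g x -> continuous (fun y => f y - g y) x.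
Proof. intros. apply continuity_pt_filterlim. apply (continuity_pt_minus f g); now apply continuity_pt_filterlim. Qed.
Lemma cR_const (c x : R) : continuous (fun _ => c) x.
Proof. apply continuity_pt_filterlim. apply continuity_pt_const. intros ? ?; auto. Qed.
Lemma cR_id (x : R) : continuous (fun y => y) x.
Proof. apply continuity_pt_filterlim. apply derivable_continuous_pt. apply derivable_pt_id. Qed.
Lemma cR_comp (f g : R -> R) x : continuous f x -> continuous g (f x) -> continuous (fun y => g (f y)) x.
Proof. intros. apply continuity_pt_filterlim. apply (continuity_pt_comp f g); now apply continuity_pt_filterlim. Qed.
Lemma cR_inv (f : R -> R) x : continuous f x -> f x <> 0 -> continuous (fun y => / f y) x.
Proof. intros. apply continuity_pt_filterlim. apply (continuity_pt_inv f); auto; now apply continuity_pt_filterlim. Qed.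
Lemma cR_div (f g : R -> R) x : continuous f x -> continuous g x -> g x <> 0 -> continuous (fun y => f y / g y) x.
Proof. intros. apply (cR_mult f (fun y => / g y)); auto. apply cR_inv; auto. Qed.
Lemma cR_exp (f : R -> R) x : continuous f x -> continuous (fun y => exp (f y)) x.
Proof. intros. apply (cR_comp f exp); auto. apply continuity_pt_filterlim. apply derivable_continuous_pt. apply derivable_pt_exp. Qed.

Lemma der_cont (f : R -> R) x l : is_derive f x l -> continuous f x.
Proof. intros H. apply continuity_pt_filterlim. apply derivable_continuous_pt. exists l. now apply is_derive_Reals. Qed.

Lemma exRInt_cont (f : R -> R) a b : (forall x, continuous f x) -> ex_RInt f a b.
Proof. intros H. apply (ex_RInt_continuous (V:=R_CompleteNormedModule)). intros; auto. Qed.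

Lemma derive_RInt0 (f : R -> R) x : (forall y, continuous f y) -> is_derive (fun y => RInt f 0 y) x (f x).
Proof.
  intros H. apply (is_derive_RInt f (fun y => RInt f 0 y) 0 x); auto.
  apply filter_forall. intros y. apply (RInt_correct (V:=R_CompleteNormedModule)). apply exRInt_cont; auto.
Qed.

Lemma RInt_chasles_R (f : R -> R) a b c : (forall x, continuous f x) -> RInt f a b + RInt f b c = RInt f a c.
Proof. intros H. apply (RInt_Chasles (V:=R_CompleteNormedModule) f a b c); apply exRInt_cont; auto. Qed.

Lemma RInt_swap_R (f : R -> R) a b : (forall x, continuous f x) -> RInt f a b = - RInt f b a.
Proof. intros H. rewrite <- (opp_RInt_swap (V:=R_CompleteNormedModule) f b a). reflexivity. apply exRInt_cont; auto. Qed.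

Lemma RInt_point_R (f : R -> R) a : RInt f a a = 0.
Proof. apply (RInt_point (V:=R_CompleteNormedModule)). Qed.

Lemma RInt_shift (f : R -> R) (t a b : R) : (forall x, continuous f x) ->
  RInt (fun u => f (t + u)) a b = RInt f (t + a) (t + b).
Proof.
  intros H. assert (E := RInt_comp_lin (V:=R_CompleteNormedModule) f 1 t a b).
  replace (1 * a + t) with (t + a) in E by ring. replace (1 * b + t) with (t + b) in E by ring.
  rewrite <- E. apply RInt_ext. intros x _. unfold scal; simpl; unfold mult; simpl. f_equal. ring_simplify. f_equal; ring.
  apply exRInt_cont; auto.
Qed.

Lemma RInt_refl (f : R -> R) (t a b : R) : (forall x, continuous f x) ->
  RInt (fun u => f (t - u)) a b = - RInt f (t - a) (t - b).
Proof.
  intros H. assert (E := RInt_comp_lin (V:=R_CompleteNormedModule) f (-1) t a b).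
  replace (-1 * a + t) with (t - a) in E by ring. replace (-1 * b + t) with (t - b) in E by ring.
  rewrite <- E. rewrite <- (RInt_opp (V:=R_CompleteNormedModule)).
  apply RInt_ext. intros x _. unfold scal; simpl; unfold mult, opp; simpl.
  replace (-1 * x + t) with (t - x) by ring. ring.
  apply (ex_RInt_continuous (V:=R_CompleteNormedModule)). intros z _.
  change (continuous (fun y => -1 * f (-1 * y + t)) z).
  apply (cR_mult (fun _ => -1)). apply cR_const.
  apply (cR_comp (fun u => -1 * u + t) f). apply cR_plus. apply (cR_mult (fun _ => -1)). apply cR_const. apply cR_id. apply cR_const. auto.
  apply exRInt_cont; auto.
Qed.

Lemma cR_neg (x : R) : continuous (fun v => - v) x.
Proof. apply continuity_pt_filterlim. apply derivable_continuous_pt. apply derivable_pt_opp. apply derivable_pt_id. Qed.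

Lemma dR_mult (f g : R -> R) x df dg : is_derive f x df -> is_derive g x dg ->
  is_derive (fun y => f y * g y) x (df * g x + f x * dg).
Proof. intros A B. apply is_derive_Reals. apply is_derive_Reals in A. apply is_derive_Reals in B.
  apply (derivable_pt_lim_mult f g); auto. Qed.
Lemma dR_plus (f g : R -> R) x df dg : is_derive f x df -> is_derive g x dg ->
  is_derive (fun y => f y + g y) x (df + dg).
Proof. intros A B. apply is_derive_Reals. apply is_derive_Reals in A. apply is_derive_Reals in B.
  apply (derivable_pt_lim_plus f g); auto. Qed.
Lemma dR_minus (f g : R -> R) x df dg : is_derive f x df -> is_derive g x dg ->
  is_derive (fun y => f y - g y) x (df - dg).
Proof. intros A B. apply is_derive_Reals. apply is_derive_Reals in A. apply is_derive_Reals in B.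
  apply (derivable_pt_lim_minus f g); auto. Qed.
Lemma dR_comp (f g : R -> R) x df dg : is_derive f (g x) df -> is_derive g x dg ->
  is_derive (fun y => f (g y)) x (df * dg).
Proof. intros A B. apply is_derive_Reals. apply is_derive_Reals in A. apply is_derive_Reals in B.
  apply (derivable_pt_lim_comp g f); auto. Qed.
Lemma dR_eq (f : R -> R) x l l' : is_derive f x l -> l = l' -> is_derive f x l'.
Proof. intros H ->; auto. Qed.
Lemma dR_const (c x : R) : is_derive (fun _ => c) x 0.
Proof. apply is_derive_Reals. apply derivable_pt_lim_const. Qed.
Lemma dR_expl (k x : R) : is_derive (fun y => exp (k * y)) x (k * exp (k * x)).
Proof. auto_derive; auto. ring. Qed.

Lemma toR (a b : R) : a = b -> a = b.
Proof. auto. Qed.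

Ltac Rgen := repeat match goal with |- context [@RInt ?V ?f ?a ?b] =>
  let x := fresh "I" in generalize (@RInt V f a b : R); intro x end;
  try match goal with |- ?a = ?b => change (@eq R a b) end.


Lemma inD_subst (Rr h : R -> R) (delta0 gamma g t0 m Rlo : R) (phi2 phi3 : R -> R) :
  0 < t0 -> 0 < Rlo ->
  (forall x, 0 < x -> continuous Rr x) -> (forall x, 0 < x -> continuous h x) ->
  continuous_on_interval (-t0) 0 phi2 -> continuous_on_interval (-t0) 0 phi3 ->
  (forall u, -t0 <= u <= 0 -> 0 < phi2 u /\ Rlo <= Rr (phi2 u)) ->
  RInt (fun u => Rr (phi2 u)) (-t0) 0 = m ->
  RInt (fun s => let tau := delay Rr t0 phi2 s in
                 exp (- delta0 * tau) * gamma * g * phi3 (- tau) * h (phi2 (- tau)) / Rr (phi2 (- tau))) 0 m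
  = RInt (fun x => exp (- delta0 * x) * gamma * g * phi3 (- x) * h (phi2 (- x))) 0 t0.
Proof.
  intros Ht0 HRlo HRc Hhc Hc2 Hc3 Hpos Hm.
  set (c2 := fun u => phi2 (clamp (-t0) 0 u)).
  set (c3 := fun u => phi3 (clamp (-t0) 0 u)).
  assert (Hc2c : forall x, continuous c2 x).
  { intros x. apply (cont_clamp (fun _ => True)); [lra|]. apply cont_on_interval_ed; auto. }
  assert (Hc3c : forall x, continuous c3 x).
  { intros x. apply (cont_clamp (fun _ => True)); [lra|]. apply cont_on_interval_ed; auto. }
  assert (Hc2p : forall u, 0 < c2 u /\ Rlo <= Rr (c2 u)).
  { intros u. unfold c2. apply Hpos. apply clamp_in. lra. }
  set (dPhi := fun v => Rr (c2 (- v))).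
  assert (HdPc : forall x, continuous dPhi x).
  { intros x. unfold dPhi. apply (cR_comp (fun v => c2 (- v)) Rr).
    apply (cR_comp (fun v => - v) c2). apply cR_neg. auto. apply HRc. apply Hc2p. }
  set (Phi := fun x => RInt dPhi 0 x).
  assert (HPhi : forall x, is_derive Phi x (dPhi x)) by (intros x; apply derive_RInt0; auto).
  assert (HdP : forall x, Rlo <= dPhi x) by (intros x; apply Hc2p).
  set (G := Finv Phi).
  assert (HG1 : forall s, Phi (G s) = s) by (intros; apply (Finv_spec Phi dPhi Rlo); auto).
  assert (HG2 : forall x, G (Phi x) = x) by (intros; apply (Finv_F Phi dPhi Rlo); auto).
  assert (Key : forall x, 0 <= x <= t0 -> RInt (fun u => Rr (phi2 u)) (-x) 0 = Phi x).
  { intros x Hx. unfold Phi, dPhi.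
    replace (RInt (fun v => Rr (c2 (- v))) 0 x) with (RInt (fun v => Rr (c2 (0 - v))) 0 x)
      by (apply RInt_ext; intros; do 3 f_equal; ring).
    rewrite (RInt_refl (fun u => Rr (c2 u))).
    rewrite (RInt_swap_R (fun u => Rr (c2 u))). replace (0 - 0) with 0 by ring. replace (0 - x) with (-x) by ring.
    rewrite Ropp_involutive. apply RInt_ext. intros y Hy. rewrite Rmin_left in Hy by lra. rewrite Rmax_right in Hy by lra.
    unfold c2. rewrite clamp_id by lra. auto.
    all: intros z; apply (cR_comp c2 Rr); auto; apply HRc; apply Hc2p. }
  assert (HP0 : Phi 0 = 0) by (unfold Phi; apply RInt_point_R).
  assert (HPt0 : Phi t0 = m) by (rewrite <- Key by lra; auto).
  assert (Hmpos : 0 < m).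
  { assert (A : Rlo * (t0 - 0) <= Phi t0 - Phi 0) by (apply (F_mvt Phi dPhi Rlo); auto). rewrite HP0, HPt0 in A. nra. }
  assert (Hdel : forall s, 0 <= s <= m -> delay Rr t0 phi2 s = G s /\ 0 <= G s <= t0).
  { intros s Hs.
    assert (HGr : 0 <= G s <= t0).
    { split.
      - apply (F_le Phi dPhi Rlo); auto. rewrite HP0, HG1; lra.
      - apply (F_le Phi dPhi Rlo); auto. rewrite HPt0, HG1; lra. }
    split; auto.
    unfold delay.
    assert (Hex : exists tau, 0 <= tau <= t0 /\ RInt (fun u => Rr (phi2 u)) (- tau) 0 = s).
    { exists (G s). split; auto. rewrite Key; auto. }
    destruct (epsilon_spec (inhabits 0) _ Hex) as [Ht Hs'].
    rewrite Key in Hs' by auto. apply (F_inj Phi dPhi Rlo); auto. rewrite HG1; auto. }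
  set (Hc := fun x => exp (- delta0 * x) * gamma * g * c3 (- x) * h (c2 (- x)) / Rr (c2 (- x))).
  assert (HHc : forall x, continuous Hc x).
  { intros x. unfold Hc.
    assert (Cn : continuous (fun v => - v) x) by apply cR_neg.
    apply cR_div.
    - apply cR_mult. apply cR_mult. apply cR_mult. apply cR_mult.
      apply cR_exp. apply (cR_mult (fun _ => - delta0)). apply cR_const. apply cR_id.
      apply cR_const. apply cR_const. apply (cR_comp (fun v => - v) c3); auto.
      apply (cR_comp (fun v => c2 (- v)) h). apply (cR_comp (fun v => - v) c2); auto. apply Hhc. apply Hc2p.
    - apply (cR_comp (fun v => c2 (- v)) Rr). apply (cR_comp (fun v => - v) c2); auto. apply HRc. apply Hc2p.
    - assert (A := Hc2p (- x)). lra. }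
  transitivity (RInt (fun s => Hc (G s)) 0 m).
  { apply RInt_ext. intros s Hs. rewrite Rmin_left in Hs by lra. rewrite Rmax_right in Hs by lra.
    destruct (Hdel s ltac:(lra)) as [E HGr]. cbv zeta. rewrite E. unfold Hc, c2, c3.
    rewrite clamp_id by lra. reflexivity. }
  rewrite <- HP0 at 1. rewrite <- HPt0.
  rewrite <- (RInt_comp (V:=R_CompleteNormedModule) (fun s => Hc (G s)) Phi dPhi 0 t0).
  - apply RInt_ext. intros y Hy. rewrite Rmin_left in Hy by lra. rewrite Rmax_right in Hy by lra.
    rewrite HG2. unfold scal; simpl; unfold mult; simpl. unfold Hc, dPhi, c2, c3.
    rewrite clamp_id by lra.
    assert (A := Hpos (- y) ltac:(lra)). field. lra.
  - intros x _. apply (cR_comp G Hc). apply continuity_pt_filterlim. apply (Finv_cont Phi dPhi Rlo); auto. auto.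
  - intros x _. split; auto.
Qed.


Lemma conservation (mu lambda g gamma delta delta0 m NT : R) (f h Rr : R -> R) (t0 : R)
  (phi1 phi2 phi3 N P Z : R -> R) (T Plo Phi_ Rlo Rhi : R) :
  0 < t0 -> t0 < T -> 0 < Plo -> 0 < Rlo -> 0 < m -> 0 <= delta0 ->
  (forall x, 0 < x -> continuous Rr x) -> (forall x, 0 < x -> continuous h x) ->
  (forall x, Plo <= x <= Phi_ -> Rlo <= Rr x <= Rhi) ->
  (forall x, 0 <= x <= T -> Plo <= P x <= Phi_) ->
  in_D g gamma delta0 m NT h Rr t0 phi1 phi2 phi3 ->
  is_TDE_solution mu lambda g gamma delta delta0 m NT f h Rr t0 phi1 phi2 phi3 N P Z ->
  (forall t, t0 <= t <= T ->
     0 <= t - delay Rr t (fun u => P (t + u)) m /\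
     m / Rhi <= delay Rr t (fun u => P (t + u)) m <= m / Rlo) /\
  (forall t, t0 <= t < T ->
     forall B, (forall v, t - delay Rr t (fun u => P (t + u)) m <= v <= t ->
                 Rabs (gamma * g * Z v * h (P v)) <= B) ->
     Rabs (N t + P t + Z t - NT) <= m / Rlo * B).
Proof.
  intros Ht0 HT HPlo HRlo Hm Hd0 HRc Hhc HRb Hband HinD Hsol.
  assert (HinD' := HinD).
  destruct HinD as [_ [Hp1c [Hp2c [Hp3c [Hpos [HmD HNTD]]]]]].
  destruct Hsol as [Hinit [HNc [HPc [HZc Hode]]]].
  set (Pe := fun x => P (clamp 0 T x)).
  set (Ze := fun x => Z (clamp 0 T x)).
  assert (HPec : forall x, continuous Pe x).
  { intros x. apply (cont_clamp (fun _ => True)); [lra|]. apply cont_from_ed; auto. }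
  assert (HZec : forall x, continuous Ze x).
  { intros x. apply (cont_clamp (fun _ => True)); [lra|]. apply cont_from_ed; auto. }
  assert (HPeb : forall x, Plo <= Pe x <= Phi_) by (intros; apply Hband; apply clamp_in; lra).
  assert (HPeq : forall x, 0 <= x <= T -> Pe x = P x) by (intros; unfold Pe; rewrite clamp_id; auto).
  assert (HZeq : forall x, 0 <= x <= T -> Ze x = Z x) by (intros; unfold Ze; rewrite clamp_id; auto).
  set (dF := fun v => Rr (Pe v)).
  assert (HdFc : forall x, continuous dF x).
  { intros x. apply (cR_comp Pe Rr); auto. apply HRc. assert (A := HPeb x). lra. }
  assert (HdFb : forall x, Rlo <= dF x <= Rhi) by (intros; apply HRb; auto).
  set (F := (fun x => RInt dF 0 x) : R -> R).
  assert (HF : forall x, is_derive F x (dF x)) by (intros; apply derive_RInt0; auto).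
  assert (HdF : forall x, Rlo <= dF x) by (intros; apply HdFb).
  assert (HF0 : F 0 = 0) by apply RInt_point_R.
  assert (Hgap : forall a b, a <= b -> Rlo * (b - a) <= F b - F a <= Rhi * (b - a)).
  { intros a b Hab. destruct (Req_dec a b) as [<-|Hne]. split; lra.
    destruct (MVT_gen F a b dF) as [c [Hc E]].
    - intros; apply HF.
    - intros; apply continuity_pt_filterlim; apply (der_cont F _ (dF x)); apply HF.
    - rewrite E. assert (A := HdFb c). split; nra. }
  assert (HdelInt : forall t tau, 0 <= tau -> tau <= t -> t <= T ->
            RInt (fun u => Rr (P (t + u))) (- tau) 0 = F t - F (t - tau)).
  { intros t tau H1 H2 H3.
    transitivity (RInt (fun u => dF (t + u)) (- tau) 0).
    { apply RInt_ext. intros x Hx. rewrite Rmin_left in Hx by lra. rewrite Rmax_right in Hx by lra.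
      unfold dF. rewrite HPeq by lra. auto. }
    rewrite RInt_shift by auto. unfold F.
    rewrite <- (RInt_chasles_R dF 0 (t - tau) t) by auto.
    replace (t + - tau) with (t - tau) by ring. replace (t + 0) with t by ring. Rgen. Rgen; ring. }
  assert (HFt0 : F t0 = m).
  { rewrite <- HmD.
    transitivity (RInt (fun u => Rr (P (t0 + u))) (- t0) 0).
    { rewrite HdelInt by lra. replace (t0 - t0) with 0 by ring. rewrite HF0. Rgen; ring. }
    apply RInt_ext. intros x Hx. rewrite Rmin_left in Hx by lra. rewrite Rmax_right in Hx by lra.
    destruct (Hinit x ltac:(lra)) as [_ [E _]]. rewrite E. auto. }
  set (U := fun t => Finv F (F t - m)).
  assert (HU : forall t, F (U t) = F t - m) by (intros; unfold U; apply (Finv_spec F dF Rlo); auto).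
  assert (HUp : forall t, t0 <= t <= T -> 0 <= U t /\ m / Rhi <= t - U t <= m / Rlo).
  { intros t Ht.
    assert (A := Hgap t0 t ltac:(lra)).
    assert (HRhi : 0 < Rhi) by (assert (B := HdFb 0); lra).
    split.
    - apply (F_le F dF Rlo); auto. rewrite HU, HF0. nra.
    - assert (HUt : U t <= t) by (apply (F_le F dF Rlo); auto; rewrite HU; lra).
      assert (B := Hgap (U t) t HUt). rewrite HU in B. split.
      + apply Rle_div_l; [lra|]. nra.
      + apply Rle_div_r; [lra|]. nra. }
  assert (HdelU : forall t, t0 <= t <= T -> delay Rr t (fun u => P (t + u)) m = t - U t).
  { intros t Ht. destruct (HUp t Ht) as [HU0 HU1].
    assert (Hmr : 0 < m / Rhi) by (apply Rdiv_lt_0_compat; auto; assert (B := HdFb 0); lra).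
    unfold delay.
    assert (Hex : exists tau, 0 <= tau <= t /\ RInt (fun u => Rr (P (t + u))) (- tau) 0 = m).
    { exists (t - U t). split; [lra|]. rewrite HdelInt by lra. replace (t - (t - U t)) with (U t) by ring.
      rewrite HU. Rgen; ring. }
    destruct (epsilon_spec (inhabits 0) _ Hex) as [Ht' Hs'].
    set (tau := epsilon (inhabits 0) (fun tau => 0 <= tau <= t /\ RInt (fun u => Rr (P (t + u))) (- tau) 0 = m)) in *.
    rewrite HdelInt in Hs' by lra.
    assert (F (t - tau) = F (U t)) by (rewrite HU; lra).
    apply (F_inj F dF Rlo) in H; auto. lra. }
  split.
  { intros t Ht. rewrite HdelU by auto. destruct (HUp t Ht) as [A B]. split; lra. }
  set (k := fun v => exp (delta0 * v) * (gamma * g * Ze v * h (Pe v))).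
  assert (Hkc : forall x, continuous k x).
  { intros x. unfold k. apply cR_mult. apply cR_exp. apply (cR_mult (fun _ => delta0)). apply cR_const. apply cR_id.
    apply cR_mult. apply cR_mult. apply (cR_mult (fun _ => gamma)). apply cR_const. apply cR_const. auto.
    apply (cR_comp Pe h); auto. apply Hhc. assert (A := HPeb x). lra. }
  set (K := (fun x => RInt k 0 x) : R -> R).
  assert (HK : forall x, is_derive K x (k x)) by (intros; apply derive_RInt0; auto).
  assert (HUd : forall t, is_derive U t (/ dF (U t) * dF t)).
  { intros t. unfold U. apply (dR_comp (Finv F) (fun y => F y - m)).
    apply (Finv_derive F dF Rlo); auto.
    apply dR_eq with (dF t - 0). apply dR_minus. apply HF. apply dR_const. Rgen; ring. }
  set (Phi := fun t => exp (delta0 * t) * (N t + P t + Z t) + K t - K (U t) - NT * exp (delta0 * t)).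
  assert (HPhid : forall t, t0 < t < T -> is_derive Phi t 0).
  { intros t Ht. destruct (Hode t ltac:(lra)) as [dN [dP dZ]].
    cbv zeta in dN, dP, dZ. rewrite HdelU in dZ by lra.
    replace (t - (t - U t)) with (U t) in dZ by ring.
    destruct (HUp t ltac:(lra)) as [HU0 [HU1 HU2]].
    assert (HUT : U t <= T) by (assert (0 < m / Rhi) by (apply Rdiv_lt_0_compat; auto; assert (B := HdFb 0); lra); lra).
    eapply dR_eq.
    - apply dR_minus. apply dR_minus. apply dR_plus.
      apply dR_mult. apply dR_expl. apply dR_plus. apply dR_plus. exact dN. exact dP. exact dZ.
      apply HK. apply (dR_comp K U). apply HK. apply HUd.
      apply (dR_mult (fun _ => NT)). apply dR_const. apply dR_expl.
    - unfold k, dF. rewrite !HZeq by lra. rewrite !HPeq by lra.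
      assert (Hr : 0 < Rr (P (U t))) by (assert (A := HRb (P (U t)) (Hband (U t) ltac:(lra))); lra).
      assert (Ee : exp (delta0 * t) * exp (- delta0 * (t - U t)) = exp (delta0 * U t)).
      { rewrite <- exp_plus. f_equal. Rgen; ring. }
      rewrite <- Ee. Rgen. field. lra. }
  assert (HPhic : forall x, 0 < x -> continuity_pt Phi x).
  { intros x Hx. apply continuity_pt_filterlim. unfold Phi.
    apply (cR_minus (fun t => exp (delta0 * t) * (N t + P t + Z t) + K t - K (U t)) (fun t => NT * exp (delta0 * t))).
    apply (cR_minus (fun t => exp (delta0 * t) * (N t + P t + Z t) + K t) (fun t => K (U t))).
    apply (cR_plus (fun t => exp (delta0 * t) * (N t + P t + Z t)) K).
    apply (cR_mult (fun t => exp (delta0 * t)) (fun t => N t + P t + Z t)).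
    apply (der_cont _ _ _ (dR_expl delta0 x)).
    apply (cR_plus (fun t => N t + P t) Z). apply (cR_plus N P).
    apply cont_from_pos; auto. apply cont_from_pos; auto. apply cont_from_pos; auto.
    apply (der_cont _ _ _ (HK x)).
    apply (der_cont (fun y => K (U y)) _ _ (dR_comp K U x _ _ (HK (U x)) (HUd x))).
    apply (cR_mult (fun _ => NT)). apply cR_const. apply (der_cont _ _ _ (dR_expl delta0 x)). }
  assert (HUt0 : U t0 = 0).
  { unfold U. rewrite HFt0. replace (m - m) with (F 0) by (rewrite HF0; ring). apply (Finv_F F dF Rlo); auto. }
  assert (HK0 : K 0 = 0) by apply RInt_point_R.
  set (jc := fun u => exp (- delta0 * u) * gamma * g * Ze (t0 - u) * h (Pe (t0 - u))).
  assert (Hjcc : forall x, continuous jc x).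
  { intros x. unfold jc. apply cR_mult. apply cR_mult. apply cR_mult. apply cR_mult.
    apply cR_exp. apply (cR_mult (fun _ => - delta0)). apply cR_const. apply cR_id.
    apply cR_const. apply cR_const.
    apply (cR_comp (fun u => t0 - u) Ze). apply (cR_minus (fun _ => t0) (fun u => u)). apply cR_const. apply cR_id. auto.
    apply (cR_comp (fun u => t0 - u) (fun v => h (Pe v))). apply (cR_minus (fun _ => t0) (fun u => u)). apply cR_const. apply cR_id.
    apply (cR_comp Pe h); auto. apply Hhc. assert (A := HPeb (t0 - x)). lra. }
  assert (HKt0 : K t0 = exp (delta0 * t0) *
            RInt (fun x => exp (- delta0 * x) * gamma * g * phi3 (- x) * h (phi2 (- x))) 0 t0).
  { transitivity (RInt (fun u => k (t0 - u)) 0 t0).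
    { rewrite RInt_refl by auto. rewrite (RInt_swap_R k (t0 - 0)) by auto.
      replace (t0 - t0) with 0 by ring. replace (t0 - 0) with t0 by ring. unfold K. Rgen. ring. }
    transitivity (RInt (fun u => scal (exp (delta0 * t0)) (jc u)) 0 t0).
    { apply RInt_ext. intros x Hx. unfold k, jc, scal; simpl; unfold mult; simpl.
      replace (exp (delta0 * (t0 - x))) with (exp (delta0 * t0) * exp (- delta0 * x)) by (rewrite <- exp_plus; f_equal; ring).
      Rgen. ring. }
    rewrite (RInt_scal (V:=R_CompleteNormedModule)) by (apply exRInt_cont; auto).
    unfold scal; simpl; unfold mult; simpl. f_equal.
    apply RInt_ext. intros x Hx. rewrite Rmin_left in Hx by lra. rewrite Rmax_right in Hx by lra.
    unfold jc. rewrite HZeq by lra. rewrite HPeq by lra.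
    destruct (Hinit (- x) ltac:(lra)) as [_ [E2 E3]]. replace (t0 + - x) with (t0 - x) in E2, E3 by ring.
    rewrite E2, E3. auto. }
  assert (HPhi0 : Phi t0 = 0).
  { unfold Phi. rewrite HUt0, HK0, HKt0.
    destruct (Hinit 0 ltac:(lra)) as [E1 [E2 E3]]. rewrite Rplus_0_r in E1, E2, E3.
    rewrite E1, E2, E3.
    rewrite (inD_subst Rr h delta0 gamma g t0 m Rlo phi2 phi3) in HNTD; auto.
    rewrite HNTD. Rgen. ring.
    intros u Hu. destruct (Hinit u Hu) as [_ [E _]]. rewrite <- E.
    assert (A := Hband (t0 + u) ltac:(lra)). assert (B := HRb _ A). split; lra. }
  assert (HPhiz : forall t, t0 <= t < T -> Phi t = 0).
  { intros t Ht. destruct (Req_dec t t0) as [->|Hne]; auto.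
    destruct (MVT_gen Phi t0 t (fun _ => 0)) as [c [Hc E]].
    - intros x Hx. rewrite Rmin_left in Hx by lra. rewrite Rmax_right in Hx by lra. apply HPhid; lra.
    - intros x Hx. rewrite Rmin_left in Hx by lra. rewrite Rmax_right in Hx by lra. apply HPhic; lra.
    - rewrite Rmult_0_l in E. lra. }
  intros t Ht B HB.
  rewrite HdelU in HB by lra. replace (t - (t - U t)) with (U t) in HB by ring.
  destruct (HUp t ltac:(lra)) as [HU0 [HU1 HU2]].
  assert (Hmr : 0 < m / Rhi) by (apply Rdiv_lt_0_compat; auto; assert (Bq := HdFb 0); lra).
  assert (HBp : 0 <= B) by (assert (A := HB t ltac:(lra)); assert (0 <= Rabs (gamma * g * Z t * h (P t))) by apply Rabs_pos; lra).
  assert (Hch : K t = K (U t) + RInt k (U t) t) by (unfold K; rewrite RInt_chasles_R by auto; auto).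
  assert (HP := HPhiz t Ht). unfold Phi in HP. rewrite Hch in HP.
  assert (Hbd : Rabs (RInt k (U t) t) <= (t - U t) * (exp (delta0 * t) * B)).
  { apply abs_RInt_le_const. lra. apply exRInt_cont; auto.
    intros v Hv. unfold k. rewrite HZeq by lra. rewrite HPeq by lra.
    rewrite Rabs_mult. rewrite (Rabs_pos_eq (exp _)) by (left; apply exp_pos).
    apply Rmult_le_compat. left; apply exp_pos. apply Rabs_pos.
    apply exp_le_exp. nra. apply HB. lra. }
  assert (He : 0 < exp (delta0 * t)) by apply exp_pos.
  assert (Eq : exp (delta0 * t) * (N t + P t + Z t - NT) = - RInt k (U t) t).
  { revert HP. Rgen. intros HP. lra. }
  assert (A : exp (delta0 * t) * Rabs (N t + P t + Z t - NT) <= (t - U t) * (exp (delta0 * t) * B)).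
  { rewrite <- (Rabs_pos_eq (exp (delta0 * t))) at 1 by lra. rewrite <- Rabs_mult. rewrite Eq. rewrite Rabs_Ropp. auto. }
  assert (A2 : Rabs (N t + P t + Z t - NT) <= (t - U t) * B) by nra.
  assert (A3 : (t - U t) * B <= m / Rlo * B) by (apply Rmult_le_compat_r; lra).
  lra.
Qed.


Lemma lim_pinf (F : R -> R) l : (forall e, 0 < e -> exists M, forall x, M < x -> Rabs (F x - l) < e) ->
  is_lim F p_infty l.
Proof. intros H. apply is_lim_spec. intros e. destruct (H e (cond_pos e)) as [M HM]. exists M. auto. Qed.

Lemma incr_le (F : R -> R) : (forall x y, 0 < x -> x < y -> F x < F y) -> forall x y, 0 < x -> x <= y -> F x <= F y.
Proof. intros H x y Hx [Hy|Hy]. left; auto. subst; lra. Qed.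

Theorem proposition5
  (mu lambda g gamma delta delta0 m NT : R)
  (f df h dh Rr dRr : R -> R) (Rinf NT1 P2 : R)
  (Hmu : mu > lambda) (Hlambda : lambda > 0) (Hg : g > 0)
  (Hgamma : 0 < gamma <= 1) (Hdelta : delta > 0) (Hgd : gamma * g > delta)
  (Hdelta0 : delta0 >= 0) (Hm : m > 0) (HNT : NT > 0)
  (Hf_C1 : C1_nonneg f df) (Hf_nonneg : forall x, 0 <= x -> 0 <= f x)
  (Hf0 : f 0 = 0) (Hdf : forall x, 0 <= x -> df x > 0)
  (Hf_lim : is_lim f p_infty 1)
  (Hh_C1 : C1_nonneg h dh) (Hh_nonneg : forall x, 0 <= x -> 0 <= h x)
  (Hh0 : h 0 = 0) (Hdh : forall x, 0 <= x -> dh x > 0)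
  (Hh_lim : is_lim h p_infty 1)
  (HR_C1 : C1_nonneg Rr dRr) (HR_nonneg : forall x, 0 <= x -> 0 <= Rr x)
  (HdR : forall x, 0 <= x -> 0 <= dRr x)
  (HdR0 : Rr 0 = 0 -> dRr 0 > 0)
  (HR_lim : is_lim Rr p_infty Rinf)
  (HNT1 : 0 <= NT1) (HfNT1 : f NT1 = lambda / mu)
  (Hexist : delta0 = 0 \/ (delta0 > 0 /\ m < Rinf * ln (gamma * g / delta) / delta0))
  (HP2 : 0 < P2)
  (HP2eq : gamma * g * exp (- delta0 * m / Rr P2) * h P2 = delta)
  (Hlow : NT1 < NT) (Hhigh : NT < NT1 + P2) :
  let N1 := NT1 in
  let P1 := NT - NT1 in
  forall eps, 0 < eps ->
  exists eta, 0 < eta /\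
  forall (t0 : R) (phi1 phi2 phi3 : R -> R),
    in_D g gamma delta0 m NT h Rr t0 phi1 phi2 phi3 ->
    (forall u, - t0 <= u <= 0 ->
       Rabs (phi1 u - N1) < eta /\ Rabs (phi2 u - P1) < eta /\ Rabs (phi3 u) < eta) ->
    forall N P Z : R -> R,
      is_TDE_solution mu lambda g gamma delta delta0 m NT f h Rr t0
        phi1 phi2 phi3 N P Z ->
      (forall t, t0 <= t ->
         sqrt ((N t - N1) ^ 2 + (P t - P1) ^ 2 + (Z t) ^ 2) < eps) /\
      is_lim N p_infty N1 /\ is_lim P p_infty P1 /\ is_lim Z p_infty 0.
Proof.
  intros N1 P1 eps Heps.
  assert (HRc : forall x, 0 < x -> continuous Rr x) by (intros; apply (C1_cont Rr dRr); auto).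
  assert (Hhc : forall x, 0 < x -> continuous h x) by (intros; apply (C1_cont h dh); auto).
  assert (HRpos : forall x, 0 < x -> 0 < Rr x) by (apply (R_pos Rr dRr); auto).
  assert (HRmono : forall x y, 0 < x -> x <= y -> Rr x <= Rr y) by (apply (C1_nondecr Rr dRr); auto).
  assert (Hhincr : forall x y, 0 < x -> x < y -> h x < h y) by (apply (C1_incr h dh); auto; intros; apply Hdh; auto).
  assert (Hfincr : forall x y, 0 < x -> x < y -> f x < f y) by (apply (C1_incr f df); auto; intros; apply Hdf; auto).
  assert (Hhle := incr_le h Hhincr). assert (Hfle := incr_le f Hfincr).
  assert (Hmu0 : 0 < mu) by lra.
  assert (Hlm : 0 < lambda / mu) by (apply Rdiv_lt_0_compat; lra).
  assert (HNT1p : 0 < NT1).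
  { destruct HNT1 as [|E]; auto. rewrite <- E in HfNT1. lra. }
  assert (HP1 : 0 < P1) by (unfold P1; lra).
  assert (HP12 : P1 < P2) by (unfold P1; lra).
  assert (Hgg : 0 < gamma * g) by nra.
  set (Cf := fun r => Rr (P1 + r) / Rr (P1 - r) * exp (- delta0 * m / Rr (P1 + r)) * gamma * g * h (P1 + r)).
  assert (HC0 : Cf 0 < delta).
  { unfold Cf. rewrite Rplus_0_r, Rminus_0_r.
    assert (A : Rr P1 <= Rr P2) by (apply HRmono; lra).
    assert (B : h P1 < h P2) by (apply Hhincr; lra).
    assert (Hr1 := HRpos P1 HP1). assert (Hr2 := HRpos P2 HP2).
    assert (C : - delta0 * m / Rr P1 <= - delta0 * m / Rr P2).
    { unfold Rdiv. assert (/ Rr P2 <= / Rr P1) by (apply Rinv_le_contravar; lra).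
      assert (0 <= delta0 * m) by nra. nra. }
    assert (D := exp_le_exp _ _ C).
    assert (E0 := exp_pos (- delta0 * m / Rr P1)).
    assert (H0 := Hh_nonneg P1 ltac:(lra)).
    replace (Rr P1 / Rr P1) with 1 by (field; lra).
    rewrite <- HP2eq.
    assert (exp (- delta0 * m / Rr P1) * h P1 < exp (- delta0 * m / Rr P2) * h P2).
    { apply Rlt_le_trans with (exp (- delta0 * m / Rr P1) * h P2). apply Rmult_lt_compat_l; lra.
      apply Rmult_le_compat_r; [apply Hh_nonneg; lra| auto]. }
    nra. }
  assert (HCc : continuous Cf 0).
  { unfold Cf.
    assert (Hp : continuous (fun r => P1 + r) 0) by (apply (cR_plus (fun _ => P1)); [apply cR_const| apply cR_id]).
    assert (Hm' : continuous (fun r => P1 - r) 0) by (apply (cR_minus (fun _ => P1)); [apply cR_const| apply cR_id]).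
    assert (HRp : continuous (fun r => Rr (P1 + r)) 0) by (apply (cR_comp (fun r => P1 + r) Rr); auto; apply HRc; lra).
    assert (HRm : continuous (fun r => Rr (P1 - r)) 0) by (apply (cR_comp (fun r => P1 - r) Rr); auto; apply HRc; lra).
    apply cR_mult. apply cR_mult. apply cR_mult. apply cR_mult.
    apply cR_div; auto. rewrite Rminus_0_r. assert (A := HRpos P1 HP1). lra.
    apply cR_exp. apply cR_div; auto. apply cR_const. rewrite Rplus_0_r. assert (A := HRpos P1 HP1). lra.
    apply cR_const. apply cR_const. apply (cR_comp (fun r => P1 + r) h); auto. apply Hhc; lra. }
  destruct (cont_ed Cf 0 HCc (delta - Cf 0) ltac:(lra)) as [dr [Hdr HCr]].
  set (rho := Rmin (Rmin (P1 / 2) (NT1 / 2)) (Rmin ((P2 - P1) / 2) (dr / 2))).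
  assert (Hrho : 0 < rho /\ rho <= P1 / 2 /\ rho <= NT1 / 2 /\ rho <= (P2 - P1) / 2 /\ rho <= dr / 2).
  { unfold rho. assert (A1 := Rmin_l (Rmin (P1 / 2) (NT1 / 2)) (Rmin ((P2 - P1) / 2) (dr / 2))).
    assert (A2 := Rmin_r (Rmin (P1 / 2) (NT1 / 2)) (Rmin ((P2 - P1) / 2) (dr / 2))).
    assert (A3 := Rmin_l (P1 / 2) (NT1 / 2)). assert (A4 := Rmin_r (P1 / 2) (NT1 / 2)).
    assert (A5 := Rmin_l ((P2 - P1) / 2) (dr / 2)). assert (A6 := Rmin_r ((P2 - P1) / 2) (dr / 2)).
    repeat split; try lra. repeat apply Rmin_pos; lra. }
  destruct Hrho as [Hrho0 [Hrho1 [Hrho2 [Hrho3 Hrho4]]]].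
  set (c := Cf rho).
  assert (Hc : c < delta).
  { assert (A := HCr rho ltac:(rewrite Rminus_0_r, Rabs_pos_eq; lra)). apply Rabs_def2 in A. unfold c. lra. }
  set (Plo := P1 - rho). set (Phi_ := P1 + rho).
  assert (HPlo : 0 < Plo) by (unfold Plo; lra).
  set (Rlo := Rr Plo). set (Rhi := Rr Phi_).
  assert (HRlo : 0 < Rlo) by (apply HRpos; auto).
  assert (HRlh : Rlo <= Rhi) by (apply HRmono; unfold Plo, Phi_; lra).
  assert (HRb : forall x, Plo <= x <= Phi_ -> Rlo <= Rr x <= Rhi) by (intros; split; apply HRmono; lra).
  set (H := h Phi_).
  assert (Hhb : forall x, Plo <= x <= Phi_ -> 0 <= h x <= H) by (intros; split; [apply Hh_nonneg; lra| apply Hhle; lra]).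
  assert (HH : 0 <= H) by (apply Hh_nonneg; unfold Phi_; lra).
  assert (Hcpos : 0 <= c).
  { unfold c, Cf. fold Plo Phi_ Rlo Rhi H.
    apply Rmult_le_pos; [|auto]. apply Rmult_le_pos; [|lra]. apply Rmult_le_pos; [|lra].
    apply Rmult_le_pos. apply Rdiv_le_0_compat; lra. left; apply exp_pos. }
  assert (Hcdef : c = Rhi / Rlo * exp (- delta0 * m / Rhi) * gamma * g * H) by auto.
  set (tmax := m / Rlo).
  assert (Htmax : 0 < tmax) by (apply Rdiv_lt_0_compat; lra).
  assert (HKc : continuous (fun k => c * exp (k * tmax) + k) 0).
  { apply cR_plus. apply (cR_mult (fun _ => c)). apply cR_const. apply cR_exp. apply (cR_mult (fun k => k) (fun _ => tmax)). apply cR_id. apply cR_const. apply cR_id. }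
  destruct (cont_ed _ 0 HKc (delta - c) ltac:(lra)) as [dk [Hdk HKr]].
  set (kap := dk / 2).
  assert (Hkap : 0 < kap) by (unfold kap; lra).
  assert (Hkey : c * exp (kap * tmax) < delta - kap).
  { assert (A := HKr kap ltac:(rewrite Rminus_0_r, Rabs_pos_eq; unfold kap; lra)). apply Rabs_def2 in A.
    rewrite Rmult_0_l, exp_0, Rmult_1_r, Rplus_0_r in A. lra. }
  set (sig := Rmin (rho / 2) (eps / 4)).
  assert (Hsig : 0 < sig /\ sig <= rho / 2 /\ sig <= eps / 4).
  { unfold sig. split. apply Rmin_pos; lra. split. apply Rmin_l. apply Rmin_r. }
  destruct Hsig as [Hsig0 [Hsig1 Hsig2]].
  set (aF := fun s => Rmin (lambda - mu * f (NT1 - s / 2)) (mu * f (NT1 + s / 2) - lambda)).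
  assert (HaF : forall s, 0 < s <= NT1 -> 0 < aF s).
  { intros s Hs. unfold aF. apply Rmin_pos.
    - assert (f (NT1 - s / 2) < f NT1) by (apply Hfincr; lra). rewrite HfNT1 in H0.
      assert (mu * f (NT1 - s / 2) < mu * (lambda / mu)) by (apply Rmult_lt_compat_l; lra).
      replace (mu * (lambda / mu)) with lambda in H1 by (field; lra). lra.
    - assert (f NT1 < f (NT1 + s / 2)) by (apply Hfincr; lra). rewrite HfNT1 in H0.
      assert (mu * (lambda / mu) < mu * f (NT1 + s / 2)) by (apply Rmult_lt_compat_l; lra).
      replace (mu * (lambda / mu)) with lambda in H1 by (field; lra). lra. }
  set (zF := fun s => P1 * aF s / (4 * g * (H + 1))).
  assert (HzF : forall s, 0 < s <= NT1 -> 0 < zF s).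
  { intros s Hs. unfold zF. apply Rdiv_lt_0_compat. apply Rmult_lt_0_compat; auto. nra. }
  assert (HzF2 : forall s, 0 < s <= NT1 -> g * zF s * H <= P1 * aF s / 4).
  { intros s Hs. unfold zF. assert (A := HaF s Hs).
    replace (g * (P1 * aF s / (4 * g * (H + 1))) * H) with (P1 * aF s / 4 * (H / (H + 1))) by (field; lra).
    assert (H / (H + 1) <= 1) by (apply Rle_div_l; lra).
    assert (0 < P1 * aF s / 4) by (apply Rdiv_lt_0_compat; [nra| lra]). nra. }
  assert (Hsign : forall s n p z, 0 < s <= sig -> Rabs (NT - n - p) <= s / 2 -> Rabs z <= zF s ->
     (p = P1 + s -> mu * p * f n - lambda * p - g * z * h p < 0) /\
     (p = P1 - s -> 0 < mu * p * f n - lambda * p - g * z * h p)).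
  { intros s n p z Hs He Hz.
    assert (Hs' : 0 < s <= NT1) by lra.
    assert (Ha := HaF s Hs'). assert (Hz2 := HzF2 s Hs').
    assert (Ha1 : aF s <= lambda - mu * f (NT1 - s / 2)) by apply Rmin_l.
    assert (Ha2 : aF s <= mu * f (NT1 + s / 2) - lambda) by apply Rmin_r.
    apply Rabs_le_between in He.
    assert (HgH : forall p', Plo <= p' <= Phi_ -> Rabs (g * z * h p') <= g * zF s * H).
    { intros p' Hp'. destruct (Hhb p' Hp') as [B1 B2]. rewrite !Rabs_mult. rewrite (Rabs_pos_eq g) by lra.
      rewrite (Rabs_pos_eq (h p')) by lra.
      apply Rmult_le_compat. apply Rmult_le_pos; [lra| apply Rabs_pos]. lra. apply Rmult_le_compat_l; lra. lra. }
    split; intros Hp.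
    - assert (Hn1 : n <= NT1 - s / 2) by (unfold P1 in Hp; lra).
      assert (Hn0 : 0 < n) by (unfold P1 in Hp; lra).
      assert (A1 : f n <= f (NT1 - s / 2)) by (apply Hfle; lra).
      assert (A2 : mu * f n - lambda <= - aF s) by (assert (mu * f n <= mu * f (NT1 - s / 2)) by (apply Rmult_le_compat_l; lra); lra).
      assert (A3 : p * (mu * f n - lambda) <= - P1 * aF s).
      { assert (P1 <= p) by lra. apply Rle_trans with (p * (- aF s)). apply Rmult_le_compat_l; lra.
        assert (P1 * aF s <= p * aF s) by (apply Rmult_le_compat_r; lra). lra. }
      assert (A4 := HgH p ltac:(unfold Plo, Phi_; lra)). apply Rabs_le_between in A4.
      replace (mu * p * f n - lambda * p - g * z * h p) with (p * (mu * f n - lambda) - g * z * h p) by ring.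
      assert (0 < P1 * aF s) by (apply Rmult_lt_0_compat; lra). lra.
    - assert (Hn1 : NT1 + s / 2 <= n) by (unfold P1 in Hp; lra).
      assert (Hn0 : 0 < n) by lra.
      assert (A1 : f (NT1 + s / 2) <= f n) by (apply Hfle; lra).
      assert (A2 : aF s <= mu * f n - lambda) by (assert (mu * f (NT1 + s / 2) <= mu * f n) by (apply Rmult_le_compat_l; lra); lra).
      assert (A3 : P1 / 2 * aF s <= p * (mu * f n - lambda)).
      { assert (P1 / 2 <= p) by lra. apply Rle_trans with (p * aF s). apply Rmult_le_compat_r; lra.
        apply Rmult_le_compat_l; lra. }
      assert (A4 := HgH p ltac:(unfold Plo, Phi_; lra)). apply Rabs_le_between in A4.
      replace (mu * p * f n - lambda * p - g * z * h p) with (p * (mu * f n - lambda) - g * z * h p) by ring.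
      assert (0 < P1 * aF s) by (apply Rmult_lt_0_compat; lra). lra. }
  set (Cz := 1 + tmax * (gamma * g * H)).
  assert (HCz : 1 <= Cz) by (unfold Cz; assert (0 <= tmax * (gamma * g * H)) by (apply Rmult_le_pos; nra); lra).
  set (eta := Rmin (Rmin (sig / (2 * Cz)) (zF sig)) (Rmin sig (eps / 4))).
  assert (Heta : 0 < eta /\ eta <= sig / (2 * Cz) /\ eta <= zF sig /\ eta <= sig /\ eta <= eps / 4).
  { unfold eta. assert (A1 := Rmin_l (Rmin (sig / (2 * Cz)) (zF sig)) (Rmin sig (eps / 4))).
    assert (A2 := Rmin_r (Rmin (sig / (2 * Cz)) (zF sig)) (Rmin sig (eps / 4))).
    assert (A3 := Rmin_l (sig / (2 * Cz)) (zF sig)). assert (A4 := Rmin_r (sig / (2 * Cz)) (zF sig)).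
    assert (A5 := Rmin_l sig (eps / 4)). assert (A6 := Rmin_r sig (eps / 4)).
    assert (0 < zF sig) by (apply HzF; lra).
    assert (0 < sig / (2 * Cz)) by (apply Rdiv_lt_0_compat; lra).
    repeat split; try lra. repeat apply Rmin_pos; lra. }
  destruct Heta as [Heta0 [Heta1 [Heta2 [Heta3 Heta4]]]].
  assert (HetaCz : eta * Cz <= sig / 2).
  { assert (eta * (2 * Cz) <= sig) by (apply Rle_div_r in Heta1; lra). lra. }
  exists eta. split; auto.
  intros t0 phi1 phi2 phi3 HinD Hnear N P Z Hsol.
  assert (HinD' := HinD). assert (Hsol' := Hsol).
  destruct HinD as [Ht0 [_ [_ [_ [Hpos [HmD _]]]]]].
  destruct Hsol as [Hinit [HNc [HPc [HZc Hode]]]].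
  assert (Hhist : forall v, 0 <= v <= t0 -> Rabs (Z v) < eta /\ Rabs (P v - P1) < eta /\ Rabs (N v - N1) < eta).
  { intros v Hv. destruct (Hinit (v - t0) ltac:(lra)) as [E1 [E2 E3]].
    replace (t0 + (v - t0)) with v in E1, E2, E3 by ring. rewrite E1, E2, E3.
    destruct (Hnear (v - t0) ltac:(lra)) as [A1 [A2 A3]]. auto. }
  set (tau := fun t => delay Rr t (fun u => P (t + u)) m).
  assert (Hreg : forall T1, t0 <= T1 -> (forall r, t0 <= r <= T1 -> Rabs (P r - P1) <= sig) ->
     (forall t, t0 <= t <= T1 -> Rabs (Z t) < eta * exp (- kap * (t - t0))) /\
     (forall t, t0 <= t <= T1 -> forall B, (forall v, 0 <= v -> t - tmax <= v <= t -> Rabs (gamma * g * Z v * h (P v)) <= B) ->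
        Rabs (N t + P t + Z t - NT) <= tmax * B)).
  { intros T1 HT1 Hb.
    assert (HPT1 : continuous P T1) by (apply cont_from_pos; auto; lra).
    destruct (cont_ed P T1 HPT1 (rho / 2) ltac:(lra)) as [dp [Hdp HPd]].
    set (T := T1 + dp / 2).
    assert (Hband : forall x, 0 <= x <= T -> Plo <= P x <= Phi_).
    { intros x Hx. unfold Plo, Phi_.
      destruct (Rle_dec x t0). destruct (Hhist x ltac:(lra)) as [_ [A _]]. apply Rabs_def2 in A. lra.
      destruct (Rle_dec x T1). assert (A := Hb x ltac:(lra)). apply Rabs_le_between in A. lra.
      assert (A := HPd x ltac:(rewrite Rabs_pos_eq; unfold T in Hx; lra)). apply Rabs_def2 in A.
      assert (B := Hb T1 ltac:(lra)). apply Rabs_le_between in B. lra. }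
    destruct (conservation mu lambda g gamma delta delta0 m NT f h Rr t0 phi1 phi2 phi3 N P Z T Plo Phi_ Rlo Rhi
      Ht0 ltac:(unfold T; lra) HPlo HRlo Hm ltac:(lra) HRc Hhc HRb Hband HinD' Hsol') as [CA CB].
    split.
    - apply (halanay Z (fun t => Rr (P t) * exp (- delta0 * tau t) * (gamma * g * Z (t - tau t) * h (P (t - tau t)) / Rr (P (t - tau t))) - delta * Z t)
        (fun t => t - tau t) t0 T1 eta c delta kap tmax); auto; try lra.
      + intros x Hx. apply cont_pt_of. apply cont_from_pos; auto; lra.
      + intros s0 Hs0. apply Hhist; auto.
      + intros t Ht. destruct (Hode t ltac:(lra)) as [_ [_ dZ]]. cbv zeta in dZ. fold (tau t) in dZ.
        destruct (CA t ltac:(unfold T; lra)) as [C1 [C2 C3]]. fold (tau t) in C1, C2, C3.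
        assert (Hmr : 0 < m / Rhi) by (apply Rdiv_lt_0_compat; lra).
        split; auto. split. unfold tmax. split; lra. split; auto.
        replace (Rr (P t) * exp (- delta0 * tau t) * (gamma * g * Z (t - tau t) * h (P (t - tau t)) / Rr (P (t - tau t))) - delta * Z t + delta * Z t)
          with (Rr (P t) / Rr (P (t - tau t)) * exp (- delta0 * tau t) * gamma * g * h (P (t - tau t)) * Z (t - tau t))
          by (field; assert (A := HRb _ (Hband (t - tau t) ltac:(unfold T; lra))); lra).
        rewrite Hcdef.
        assert (Bt := HRb _ (Hband t ltac:(unfold T; lra))).
        assert (Bv := HRb _ (Hband (t - tau t) ltac:(unfold T; lra))).
        assert (Hv := Hhb _ (Hband (t - tau t) ltac:(unfold T; lra))).
        assert (E1 : Rr (P t) / Rr (P (t - tau t)) <= Rhi / Rlo).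
        { unfold Rdiv. apply Rmult_le_compat. lra. left; apply Rinv_0_lt_compat; lra. lra.
          apply Rinv_le_contravar; lra. }
        assert (E2 : exp (- delta0 * tau t) <= exp (- delta0 * m / Rhi)).
        { apply exp_le_exp. replace (- delta0 * m / Rhi) with (- delta0 * (m / Rhi)) by (field; lra). nra. }
        assert (E0 : 0 <= Rr (P t) / Rr (P (t - tau t))) by (apply Rdiv_le_0_compat; lra).
        rewrite !Rabs_mult. rewrite (Rabs_pos_eq (Rr (P t) / Rr (P (t - tau t)))) by lra.
        rewrite (Rabs_pos_eq (exp _)) by (left; apply exp_pos). rewrite (Rabs_pos_eq gamma) by lra.
        rewrite (Rabs_pos_eq g) by lra. rewrite (Rabs_pos_eq (h _)) by lra.
        apply Rmult_le_compat_r. apply Rabs_pos.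
        assert (Ex := exp_pos (- delta0 * tau t)).
        apply Rmult_le_compat; [| lra | | lra].
        apply Rmult_le_pos; [|lra]. apply Rmult_le_pos; [|lra]. apply Rmult_le_pos; lra.
        apply Rmult_le_compat_r; [lra|]. apply Rmult_le_compat_r; [lra|].
        apply Rmult_le_compat; lra.
    - intros t Ht B HB. unfold tmax in *. apply CB. unfold T; lra.
      intros v Hv. destruct (CA t ltac:(unfold T; lra)) as [C1 [C2 C3]].
      apply HB; lra. }
  assert (Hsignq : forall s n p z, 0 < s <= sig -> Rabs (NT - n - p) <= s / 2 -> Rabs z <= zF s ->
     (P1 + s <= p <= P1 + sig -> mu * p * f n - lambda * p - g * z * h p <= - (P1 * aF s) / 2) /\
     (P1 - sig <= p <= P1 - s -> P1 * aF s / 4 <= mu * p * f n - lambda * p - g * z * h p)).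
  { intros s0 n p z Hs He Hz.
    assert (Hs' : 0 < s0 <= NT1) by lra.
    assert (Ha := HaF s0 Hs'). assert (Hz2 := HzF2 s0 Hs').
    assert (Ha1 : aF s0 <= lambda - mu * f (NT1 - s0 / 2)) by apply Rmin_l.
    assert (Ha2 : aF s0 <= mu * f (NT1 + s0 / 2) - lambda) by apply Rmin_r.
    apply Rabs_le_between in He.
    assert (HgH : forall p', Plo <= p' <= Phi_ -> Rabs (g * z * h p') <= g * zF s0 * H).
    { intros p' Hp'. destruct (Hhb p' Hp') as [B1 B2]. rewrite !Rabs_mult. rewrite (Rabs_pos_eq g) by lra.
      rewrite (Rabs_pos_eq (h p')) by lra.
      apply Rmult_le_compat. apply Rmult_le_pos; [lra| apply Rabs_pos]. lra. apply Rmult_le_compat_l; lra. lra. }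
    assert (HP1a : 0 < P1 * aF s0) by (apply Rmult_lt_0_compat; lra).
    split; intros Hp.
    - assert (Hn1 : n <= NT1 - s0 / 2) by (unfold P1 in Hp; lra).
      assert (Hn0 : 0 < n) by (unfold P1 in Hp; lra).
      assert (A1 : f n <= f (NT1 - s0 / 2)) by (apply Hfle; lra).
      assert (A2 : mu * f n - lambda <= - aF s0) by (assert (mu * f n <= mu * f (NT1 - s0 / 2)) by (apply Rmult_le_compat_l; lra); lra).
      assert (A3 : p * (mu * f n - lambda) <= - P1 * aF s0).
      { assert (P1 <= p) by lra. apply Rle_trans with (p * (- aF s0)). apply Rmult_le_compat_l; lra.
        assert (P1 * aF s0 <= p * aF s0) by (apply Rmult_le_compat_r; lra). lra. }
      assert (A4 := HgH p ltac:(unfold Plo, Phi_; lra)). apply Rabs_le_between in A4.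
      replace (mu * p * f n - lambda * p - g * z * h p) with (p * (mu * f n - lambda) - g * z * h p) by ring.
      lra.
    - assert (Hn1 : NT1 + s0 / 2 <= n) by (unfold P1 in Hp; lra).
      assert (Hn0 : 0 < n) by lra.
      assert (A1 : f (NT1 + s0 / 2) <= f n) by (apply Hfle; lra).
      assert (A2 : aF s0 <= mu * f n - lambda) by (assert (mu * f (NT1 + s0 / 2) <= mu * f n) by (apply Rmult_le_compat_l; lra); lra).
      assert (A3 : P1 / 2 * aF s0 <= p * (mu * f n - lambda)).
      { assert (P1 / 2 <= p) by lra. apply Rle_trans with (p * aF s0). apply Rmult_le_compat_r; lra.
        apply Rmult_le_compat_l; lra. }
      assert (A4 := HgH p ltac:(unfold Plo, Phi_; lra)). apply Rabs_le_between in A4.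
      replace (mu * p * f n - lambda * p - g * z * h p) with (p * (mu * f n - lambda) - g * z * h p) by ring.
      lra. }
  set (Pd := fun t => mu * P t * f (N t) - lambda * P t - g * Z t * h (P t)).
  assert (HPd : forall t, t0 < t -> is_derive P t (Pd t)).
  { intros t Ht. destruct (Hode t Ht) as [_ [dP _]]. exact dP. }
  assert (HPc' : forall x, t0 <= x -> continuity_pt P x) by (intros; apply cont_pt_of; apply cont_from_pos; auto; lra).
  assert (HZb_hist : forall T1 v, t0 <= T1 -> (forall r, t0 <= r <= T1 -> Rabs (P r - P1) <= sig) -> 0 <= v <= T1 ->
            Rabs (Z v) < eta /\ Plo <= P v <= Phi_).
  { intros T1 v HT1 Hb Hv. destruct (Rle_dec v t0).
    - destruct (Hhist v ltac:(lra)) as [A [B _]]. apply Rabs_def2 in B. unfold Plo, Phi_. split; [auto| lra].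
    - destruct (Hreg T1 HT1 Hb) as [HZ _]. assert (A := HZ v ltac:(lra)).
      assert (exp (- kap * (v - t0)) <= 1) by (rewrite <- exp_0; apply exp_le_exp; nra).
      assert (B := Hb v ltac:(lra)). apply Rabs_le_between in B. unfold Plo, Phi_. split; [nra| lra]. }
  assert (HBgen : forall T1 t zeta, t0 <= T1 -> (forall r, t0 <= r <= T1 -> Rabs (P r - P1) <= sig) -> t0 <= t <= T1 ->
            (forall v, 0 <= v -> t - tmax <= v <= t -> Rabs (Z v) <= zeta) ->
            Rabs (N t + P t + Z t - NT) <= tmax * (gamma * g * zeta * H)).
  { intros T1 t zeta HT1 Hb Ht Hz. destruct (Hreg T1 HT1 Hb) as [_ HC]. apply HC; auto.
    intros v Hv0 Hv. destruct (HZb_hist T1 v HT1 Hb ltac:(lra)) as [_ Bp].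
    destruct (Hhb _ Bp) as [h1 h2]. assert (Zv := Hz v Hv0 Hv).
    rewrite !Rabs_mult. rewrite (Rabs_pos_eq gamma) by lra. rewrite (Rabs_pos_eq g) by lra. rewrite (Rabs_pos_eq (h _)) by lra.
    apply Rmult_le_compat; try lra. apply Rmult_le_pos; [nra| apply Rabs_pos].
    apply Rmult_le_compat_l; [nra| auto]. }
  assert (Hband_all : forall t, t0 <= t -> Rabs (P t - P1) < sig).
  { intros t Ht. apply (band_stay P Pd t0 t P1 sig); auto.
    - intros x Hx. apply HPc'; lra.
    - destruct (Hhist t0 ltac:(lra)) as [_ [A _]]. lra.
    - intros x Hx. apply HPd; lra.
    - intros t1 Ht1 Hb1.
      destruct (Hreg t1 ltac:(lra) Hb1) as [HZ _].
      assert (HZt : Rabs (Z t1) <= zF sig).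
      { assert (A := HZ t1 ltac:(lra)). assert (exp (- kap * (t1 - t0)) <= 1) by (rewrite <- exp_0; apply exp_le_exp; nra). nra. }
      assert (HC := HBgen t1 t1 eta ltac:(lra) Hb1 ltac:(lra)).
      assert (HC' : Rabs (N t1 + P t1 + Z t1 - NT) <= tmax * (gamma * g * eta * H)).
      { apply HC. intros v Hv0 Hv. left. apply (HZb_hist t1 v); auto; lra. }
      assert (He : Rabs (NT - N t1 - P t1) <= sig / 2).
      { assert (Rabs (Z t1) < eta) by (apply (HZb_hist t1 t1); auto; lra).
        replace (NT - N t1 - P t1) with (Z t1 - (N t1 + P t1 + Z t1 - NT)) by ring.
        eapply Rle_trans. apply Rabs_triang. rewrite Rabs_Ropp.
        assert (eta + tmax * (gamma * g * eta * H) = eta * Cz) by (unfold Cz; ring). lra. }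
      destruct (Hsignq sig (N t1) (P t1) (Z t1) ltac:(lra) He HZt) as [S1 S2].
      assert (HP1a : 0 < P1 * aF sig) by (apply Rmult_lt_0_compat; [lra| apply HaF; lra]).
      split; intros E.
      + assert (A := S1 ltac:(lra)). unfold Pd. lra.
      + assert (A := S2 ltac:(lra)). unfold Pd. lra.
    - lra. }
  assert (Hb_all : forall T1 r, t0 <= r <= T1 -> Rabs (P r - P1) <= sig).
  { intros T1 r Hr. left. apply Hband_all. lra. }
  assert (HZt_all : forall t, 0 <= t -> Rabs (Z t) < eta /\ Plo <= P t <= Phi_).
  { intros t Ht. destruct (Rle_dec t t0). apply (HZb_hist t0 t); auto; try lra. intros; apply (Hb_all t0); lra.
    apply (HZb_hist t t); auto; try lra. intros; apply (Hb_all t); lra. }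
  assert (HC_all : forall t zeta, t0 <= t -> (forall v, 0 <= v -> t - tmax <= v <= t -> Rabs (Z v) <= zeta) ->
            Rabs (N t + P t + Z t - NT) <= tmax * (gamma * g * zeta * H)).
  { intros t zeta Ht Hz. apply (HBgen t t zeta); auto; try lra. intros; apply (Hb_all t); lra. }
  assert (Hdec : forall t, t0 <= t -> Rabs (Z t) < eta * exp (- kap * (t - t0))).
  { intros t Ht. destruct (Hreg t Ht (Hb_all t)) as [HZ _]. apply HZ. lra. }
  split.
  { intros t Ht.
    destruct (HZt_all t ltac:(lra)) as [HZt _].
    assert (HC := HC_all t eta Ht ltac:(intros v Hv0 Hv; left; apply HZt_all; auto)).
    assert (HP := Hband_all t Ht).
    assert (HN : Rabs (N t - N1) <= 3 * sig / 2).
    { replace (N t - N1) with ((N t + P t + Z t - NT) + (- (P t - P1)) + (- Z t)) by (unfold N1, P1; ring).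
      eapply Rle_trans. apply Rabs_triang. eapply Rle_trans. apply Rplus_le_compat_r. apply Rabs_triang.
      rewrite !Rabs_Ropp.
      assert (eta + tmax * (gamma * g * eta * H) = eta * Cz) by (unfold Cz; ring). lra. }
    assert (A1 : (N t - N1) ^ 2 <= (3 * eps / 8) ^ 2).
    { rewrite <- pow2_abs. assert (0 <= Rabs (N t - N1)) by apply Rabs_pos. apply pow_incr. lra. }
    assert (A2 : (P t - P1) ^ 2 <= (eps / 4) ^ 2).
    { rewrite <- pow2_abs. assert (0 <= Rabs (P t - P1)) by apply Rabs_pos. apply pow_incr. lra. }
    assert (A3 : (Z t) ^ 2 <= (eps / 4) ^ 2).
    { rewrite <- pow2_abs. assert (0 <= Rabs (Z t)) by apply Rabs_pos. apply pow_incr. lra. }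
    rewrite <- (sqrt_pow2 eps) by lra. apply sqrt_lt_1.
    assert (0 <= (N t - N1) ^ 2) by apply pow2_ge_0. assert (0 <= (P t - P1) ^ 2) by apply pow2_ge_0.
    assert (0 <= Z t ^ 2) by apply pow2_ge_0. lra. apply pow2_ge_0. nra. }
  assert (Hconv : forall s, 0 < s <= sig -> exists T4, forall t, T4 <= t ->
            Rabs (P t - P1) < s /\ Rabs (NT - N t - P t) <= s / 2 /\ Rabs (Z t) <= s).
  { intros s0 Hs.
    assert (Hs' : 0 < s0 <= NT1) by lra.
    assert (HzFs := HzF s0 Hs').
    set (zeta0 := Rmin (s0 / (2 * Cz)) (zF s0)).
    assert (Hz0 : 0 < zeta0 /\ zeta0 <= s0 / (2 * Cz) /\ zeta0 <= zF s0).
    { unfold zeta0. split. apply Rmin_pos; [apply Rdiv_lt_0_compat; lra| lra]. split. apply Rmin_l. apply Rmin_r. }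
    destruct Hz0 as [Hz00 [Hz01 Hz02]].
    assert (Hz0C : zeta0 * Cz <= s0 / 2) by (apply Rle_div_r in Hz01; lra).
    assert (Hz0s : zeta0 <= s0 / 2) by nra.
    set (T2 := t0 + (eta / zeta0) / kap).
    assert (HT2 : t0 <= T2).
    { unfold T2. assert (0 < eta / zeta0 / kap) by (repeat apply Rdiv_lt_0_compat; lra). lra. }
    assert (HZ2 : forall v, T2 <= v -> Rabs (Z v) <= zeta0).
    { intros v Hv. assert (A := Hdec v ltac:(lra)).
      assert (B : exp (- kap * (v - t0)) <= exp (- (eta / zeta0))).
      { apply exp_le_exp. unfold T2 in Hv.
        assert (kap * (eta / zeta0 / kap) = eta / zeta0) by (field; lra). nra. }
      assert (C : eta / zeta0 < exp (eta / zeta0)).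
      { assert (0 < eta / zeta0) by (apply Rdiv_lt_0_compat; lra). assert (D := exp_ineq1 (eta / zeta0) ltac:(lra)). lra. }
      assert (D : exp (- (eta / zeta0)) < zeta0 / eta).
      { rewrite exp_Ropp. assert (0 < eta / zeta0) by (apply Rdiv_lt_0_compat; lra).
        replace (zeta0 / eta) with (/ (eta / zeta0)) by (field; lra).
        apply Rinv_lt_contravar; auto. nra. }
      assert (eta * exp (- kap * (v - t0)) <= eta * (zeta0 / eta)) by (apply Rmult_le_compat_l; lra).
      replace (eta * (zeta0 / eta)) with zeta0 in H0 by (field; lra). lra. }
    set (T3 := T2 + tmax).
    assert (Hes : forall t, T3 <= t -> Rabs (NT - N t - P t) <= s0 / 2 /\ Rabs (Z t) <= zF s0 /\ Rabs (Z t) <= s0).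
    { intros t Ht. assert (HZ := HZ2 t ltac:(unfold T3 in Ht; lra)).
      assert (HC := HC_all t zeta0 ltac:(unfold T3 in Ht; lra) ltac:(intros v Hv0 Hv; apply HZ2; unfold T3 in Ht; lra)).
      split; [|split; lra].
      replace (NT - N t - P t) with (Z t - (N t + P t + Z t - NT)) by ring.
      eapply Rle_trans. apply Rabs_triang. rewrite Rabs_Ropp.
      assert (zeta0 + tmax * (gamma * g * zeta0 * H) = zeta0 * Cz) by (unfold Cz; ring). lra. }
    assert (HT3 : t0 < T3) by (unfold T3; lra).
    assert (Ha := HaF s0 Hs'). assert (HP1a : 0 < P1 * aF s0) by (apply Rmult_lt_0_compat; lra).
    assert (Henter : exists t2, T3 <= t2 /\ Rabs (P t2 - P1) < s0).
    { destruct (classic (exists t2, T3 <= t2 /\ Rabs (P t2 - P1) < s0)) as [|Hn]; auto. exfalso.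
      assert (Hn' : forall t, T3 <= t -> s0 <= Rabs (P t - P1)).
      { intros t Ht. destruct (Rle_dec s0 (Rabs (P t - P1))); auto. exfalso; apply Hn; exists t; split; auto; lra. }
      assert (Hside : forall t, T3 <= t -> (P1 <= P T3 -> P1 + s0 <= P t) /\ (P T3 < P1 -> P t <= P1 - s0)).
      { intros t Ht. assert (A0 := Hn' T3 ltac:(lra)). assert (At := Hn' t Ht).
        split; intros HT.
        - destruct (Rle_dec (P1 + s0) (P t)) as [|Hlt]; auto. exfalso.
          assert (Pt : P t <= P1 - s0) by (unfold Rabs in At; destruct (Rcase_abs (P t - P1)); lra).
          assert (PT : P1 + s0 <= P T3) by (unfold Rabs in A0; destruct (Rcase_abs (P T3 - P1)); lra).
          destruct (first_cross (fun x => P1 - P x) T3 t ltac:(lra)) as [t1 [Ht1 [Hq _]]].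
          intros x Hx. apply continuity_pt_minus. apply continuity_pt_const; intros ? ?; auto. apply HPc'; lra.
          lra. lra.
          assert (A1 := Hn' t1 ltac:(lra)). replace (P t1 - P1) with 0 in A1 by lra. rewrite Rabs_R0 in A1. lra.
        - destruct (Rle_dec (P t) (P1 - s0)) as [|Hlt]; auto. exfalso.
          assert (Pt : P1 + s0 <= P t) by (unfold Rabs in At; destruct (Rcase_abs (P t - P1)); lra).
          assert (PT : P T3 <= P1 - s0) by (unfold Rabs in A0; destruct (Rcase_abs (P T3 - P1)); lra).
          destruct (first_cross (fun x => P x - P1) T3 t ltac:(lra)) as [t1 [Ht1 [Hq _]]].
          intros x Hx. apply continuity_pt_minus. apply HPc'; lra. apply continuity_pt_const; intros ? ?; auto.
          lra. lra.
          assert (A1 := Hn' t1 ltac:(lra)). replace (P t1 - P1) with 0 in A1 by lra. rewrite Rabs_R0 in A1. lra. }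
      destruct (Rle_dec P1 (P T3)) as [HT|HT].
      - set (L := 4 * sig / (P1 * aF s0)).
        assert (HL : 0 < L) by (unfold L; apply Rdiv_lt_0_compat; lra).
        destruct (MVT_gen P T3 (T3 + L) Pd) as [c0 [Hc0 E]].
        + intros x Hx. rewrite Rmin_left in Hx by lra. rewrite Rmax_right in Hx by lra. apply HPd; lra.
        + intros x Hx. rewrite Rmin_left in Hx by lra. rewrite Rmax_right in Hx by lra. apply HPc'; lra.
        + rewrite Rmin_left in Hc0 by lra. rewrite Rmax_right in Hc0 by lra.
          destruct (Hes c0 ltac:(lra)) as [E1 [E2 _]].
          assert (Hc1 := proj1 (Hside c0 ltac:(lra)) HT).
          assert (Hc2 := Hband_all c0 ltac:(lra)). apply Rabs_def2 in Hc2.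
          assert (S := proj1 (Hsignq s0 (N c0) (P c0) (Z c0) Hs E1 E2) ltac:(lra)). fold (Pd c0) in S.
          assert (Pd c0 * (T3 + L - T3) <= - (P1 * aF s0) / 2 * L) by (replace (T3 + L - T3) with L by ring; apply Rmult_le_compat_r; lra).
          assert (- (P1 * aF s0) / 2 * L = - 2 * sig) by (unfold L; field; lra).
          assert (A1 := proj1 (Hside (T3 + L) ltac:(lra)) HT).
          assert (A2 := Hband_all T3 ltac:(lra)). apply Rabs_def2 in A2. lra.
      - set (L := 8 * sig / (P1 * aF s0)).
        assert (HL : 0 < L) by (unfold L; apply Rdiv_lt_0_compat; lra).
        assert (HT' : P T3 < P1) by lra.
        destruct (MVT_gen P T3 (T3 + L) Pd) as [c0 [Hc0 E]].
        + intros x Hx. rewrite Rmin_left in Hx by lra. rewrite Rmax_right in Hx by lra. apply HPd; lra.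
        + intros x Hx. rewrite Rmin_left in Hx by lra. rewrite Rmax_right in Hx by lra. apply HPc'; lra.
        + rewrite Rmin_left in Hc0 by lra. rewrite Rmax_right in Hc0 by lra.
          destruct (Hes c0 ltac:(lra)) as [E1 [E2 _]].
          assert (Hc1 := proj2 (Hside c0 ltac:(lra)) HT').
          assert (Hc2 := Hband_all c0 ltac:(lra)). apply Rabs_def2 in Hc2.
          assert (S := proj2 (Hsignq s0 (N c0) (P c0) (Z c0) Hs E1 E2) ltac:(lra)). fold (Pd c0) in S.
          assert (P1 * aF s0 / 4 * L <= Pd c0 * (T3 + L - T3)) by (replace (T3 + L - T3) with L by ring; apply Rmult_le_compat_r; lra).
          assert (P1 * aF s0 / 4 * L = 2 * sig) by (unfold L; field; lra).
          assert (A1 := proj2 (Hside (T3 + L) ltac:(lra)) HT').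
          assert (A2 := Hband_all T3 ltac:(lra)). apply Rabs_def2 in A2. lra. }
    destruct Henter as [t2 [Ht2 Hp2]].
    exists t2. intros t Ht.
    destruct (Hes t ltac:(lra)) as [E1 [_ E3]]. split; [|split; auto].
    apply (band_stay P Pd t2 t P1 s0); try lra.
    - intros x Hx. apply HPc'; lra.
    - intros x Hx. apply HPd; lra.
    - intros t1 Ht1 Hb1. destruct (Hes t1 ltac:(lra)) as [F1 [F2 _]].
      assert (Hc2 := Hband_all t1 ltac:(lra)). apply Rabs_def2 in Hc2.
      destruct (Hsignq s0 (N t1) (P t1) (Z t1) Hs F1 F2) as [S1 S2].
      split; intros EE.
      + assert (A := S1 ltac:(lra)). unfold Pd. lra.
      + assert (A := S2 ltac:(lra)). unfold Pd. lra. }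
  split; [|split].
  - apply lim_pinf. intros e He.
    destruct (Hconv (Rmin sig (e / 3)) ltac:(split; [apply Rmin_pos; lra| apply Rmin_l])) as [T4 HT4].
    exists T4. intros x Hx. destruct (HT4 x ltac:(lra)) as [A1 [A2 _]].
    assert (Rmin sig (e / 3) <= e / 3) by apply Rmin_r.
    replace (N x - N1) with (- (NT - N x - P x) - (P x - P1)) by (unfold N1, P1; ring).
    eapply Rle_lt_trans. apply Rabs_triang. rewrite !Rabs_Ropp. lra.
  - apply lim_pinf. intros e He.
    destruct (Hconv (Rmin sig (e / 3)) ltac:(split; [apply Rmin_pos; lra| apply Rmin_l])) as [T4 HT4].
    exists T4. intros x Hx. destruct (HT4 x ltac:(lra)) as [A1 _].
    assert (Rmin sig (e / 3) <= e / 3) by apply Rmin_r. lra.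
  - apply lim_pinf. intros e He.
    destruct (Hconv (Rmin sig (e / 3)) ltac:(split; [apply Rmin_pos; lra| apply Rmin_l])) as [T4 HT4].
    exists T4. intros x Hx. destruct (HT4 x ltac:(lra)) as [_ [_ A3]].
    assert (Rmin sig (e / 3) <= e / 3) by apply Rmin_r. rewrite Rminus_0_r. lra.
Qed.
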